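(* Let $\Omega\subset\mathbb{R}^2$ be open, $(\Omega_n)_{n\in\mathbb{N}}$ non-empty open sets with $\Omega_n\ne\mathbb{R}^2$, $\Omega_n\subset\Omega_{n+1}$, $\Omega=\bigcup_n\Omega_n$ and $d_{n,k}:=\operatorname{dist}(\Omega_n,\partial\Omega_k)>0$ for all $k>n$, and let $\nu_n\colon\Omega\to(0,\infty)$ be continuous with $\nu_n\le\nu_{n+1}$. Suppose that for every $n\in\mathbb{N}$ there is an integer $I_1(n)>n$ such that for every $\varepsilon>0$ there is a compact set $K\subset\overline{\Omega_n}$ with $\nu_n(x)\le\varepsilon\nu_{I_1(n)}(x)$ for all $x\in\Omega_n\setminus K$. Let $n\in\mathbb{N}$. Then $\pi_{I_1(n),n}(\mathcal{D}(\Omega_{I_1(n)}))$ is dense in $\pi_{I_1(n),n}(\mathcal{E}\nu_{I_1(n)}(\Omega_{I_1(n)}))$ with respect to the seminorms $(|\cdot|_{n,m})_{m\in\mathbb{N}_0}$.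
   Context: $\operatorname{dist}(M_0,M_1):=\inf_{x\in M_0,y\in M_1}|x-y|$ (Euclidean norm; $\infty$ if a set is empty). For $n\in\mathbb{N}$, $m\in\mathbb{N}_0$, $f\in\mathcal{C}^\infty(\Omega_n,\mathbb{C})$: $|f|_{n,m}:=\sup_{x\in\Omega_n,\beta\in\mathbb{N}_0^2,|\beta|\le m}|\partial^\beta f(x)|\nu_n(x)$, and $\mathcal{E}\nu_n(\Omega_n)$ is the space of such $f$ with $|f|_{n,m}<\infty$ for all $m$. $\mathcal{D}(U)$ is the space of smooth compactly supported $\mathbb{C}$-valued functions on $U$. $\pi_{k,n}(f):=f|_{\Omega_n}$ for $k\ge n$. *)

(* Defs.v *)
From Stdlib Require Import Reals List.
From Coquelicot Require Import Coquelicot.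
Open Scope R_scope.

Definition pt : Type := (R * R)%type.

Definition eucl (p q : pt) : R :=
  sqrt ((fst p - fst q) ^ 2 + (snd p - snd q) ^ 2).

Definition d1 (f : pt -> C) : pt -> C := fun p =>
  (Derive (fun t => fst (f (t, snd p))) (fst p),
   Derive (fun t => snd (f (t, snd p))) (fst p)).
Definition d2 (f : pt -> C) : pt -> C := fun p =>
  (Derive (fun t => fst (f (fst p, t))) (snd p),
   Derive (fun t => snd (f (fst p, t))) (snd p)).
Definition ex_d1 (f : pt -> C) (p : pt) : Prop :=
  ex_derive (fun t => fst (f (t, snd p))) (fst p) /\
  ex_derive (fun t => snd (f (t, snd p))) (fst p).
Definition ex_d2 (f : pt -> C) (p : pt) : Prop :=
  ex_derive (fun t => fst (f (fst p, t))) (snd p) /\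
  ex_derive (fun t => snd (f (fst p, t))) (snd p).

Fixpoint dw (w : list bool) (f : pt -> C) : pt -> C :=
  match w with
  | nil => f
  | b :: w' => (if b then d2 else d1) (dw w' f)
  end.

Definition smooth_on (U : pt -> Prop) (f : pt -> C) : Prop :=
  forall (w : list bool) (p : pt), U p ->
    ex_d1 (dw w f) p /\ ex_d2 (dw w f) p /\ continuous (dw w f) p.

Definition dpow (i j : nat) (f : pt -> C) : pt -> C :=
  Nat.iter i d1 (Nat.iter j d2 f).

(* |f|_{U,nu,m} <= c, i.e. sup_{x in U, |beta| <= m} |d^beta f(x)| nu(x) <= c *)
Definition wbound (U : pt -> Prop) (nu : pt -> R) (m : nat) (f : pt -> C) (c : R) : Prop :=
  forall (x : pt) (i j : nat), U x -> (i + j <= m)%nat -> Cmod (dpow i j f x) * nu x <= c.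

Definition Enu (U : pt -> Prop) (nu : pt -> R) (f : pt -> C) : Prop :=
  smooth_on U f /\ forall m : nat, exists c : R, wbound U nu m f c.

Definition closure_of (A : pt -> Prop) (p : pt) : Prop :=
  forall eps : R, 0 < eps -> exists q, A q /\ eucl p q < eps.

Definition boundary (A : pt -> Prop) (p : pt) : Prop :=
  closure_of A p /\ closure_of (fun q => ~ A q) p.

Definition compact_set (K : pt -> Prop) : Prop :=
  forall (I : Type) (V : I -> pt -> Prop),
    (forall i, open (V i)) ->
    (forall x, K x -> exists i, V i x) ->
    exists l : list I, forall x, K x -> exists i, In i l /\ V i x.

Definition test_fn (U : pt -> Prop) (g : pt -> C) : Prop :=
  smooth_on U g /\
  exists K, compact_set K /\ (forall x, K x -> U x) /\ (forall x, ~ K x -> g x = 0%C).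

(* dist(A, B) > 0 (dist = inf |x-y|, +oo if a set is empty) *)
Definition dist_gt0 (A B : pt -> Prop) : Prop :=
  exists delta : R, 0 < delta /\ forall x y, A x -> B y -> delta <= eucl x y.

(* Main.v *)
Require Import Defs.
From Stdlib Require Import Reals List Lra Lia Classical ClassicalEpsilon FunctionalExtensionality Rgeom.
From Coquelicot Require Import Coquelicot.
Open Scope R_scope.
Require Import Defs.

Fixpoint smL (L : nat) (u : R -> R) : Prop :=
  (forall x, ex_derive u x) /\ match L with 0%nat => True | S L' => smL L' (Derive u) end.
Definition sm1 (u : R -> R) : Prop := forall L, smL L u.

Lemma smL_weak : forall L u, smL (S L) u -> smL L u.
Proof.
  induction L as [|L IH]; intros u [H1 H2]; simpl; split; auto.
Qed.

Lemma smL_ex : forall L u, smL L u -> forall x, ex_derive u x.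
Proof. intros [|L] u H; apply H. Qed.

Lemma sm1_ex : forall u, sm1 u -> forall x, ex_derive u x.
Proof. intros u H. apply (smL_ex 0%nat), H. Qed.

Lemma sm1_D : forall u, sm1 u -> sm1 (Derive u).
Proof. intros u H L. exact (proj2 (H (S L))). Qed.

Lemma Derive_n_S_fun : forall u n, Derive_n u (S n) = Derive (Derive_n u n).
Proof. reflexivity. Qed.

Lemma sm1_Dn : forall u n, sm1 u -> sm1 (Derive_n u n).
Proof.
  intros u n H; induction n as [|n IH].
  - intro L. assert (E : Derive_n u 0 = u) by (apply functional_extensionality; reflexivity).
    rewrite E. apply H.
  - rewrite Derive_n_S_fun. apply sm1_D, IH.
Qed.

Lemma sm1_Dn_ex : forall u n x, sm1 u -> ex_derive (Derive_n u n) x.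
Proof. intros. apply sm1_ex, sm1_Dn; auto. Qed.

Lemma sm1_ext : forall u v, (forall x, u x = v x) -> sm1 u -> sm1 v.
Proof.
  intros u v E H. assert (u = v) by (apply functional_extensionality; auto). subst; auto.
Qed.

Lemma smL_const : forall L a, smL L (fun _ => a).
Proof.
  induction L as [|L IH]; intros a; simpl; split; auto using ex_derive_const.
  assert (E : Derive (fun _ : R => a) = fun _ => 0).
  { apply functional_extensionality; intro; apply Derive_const. }
  rewrite E; apply IH.
Qed.

Lemma smL_plus : forall L u v, smL L u -> smL L v -> smL L (fun x => u x + v x).
Proof.
  induction L as [|L IH]; intros u v Hu Hv.
  - split; auto. intro x. apply (ex_derive_plus u v); [apply Hu|apply Hv].
  - split. intro x. apply (ex_derive_plus u v); [apply Hu|apply Hv].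
    assert (E : Derive (fun x => u x + v x) = fun x => Derive u x + Derive v x).
    { apply functional_extensionality; intro x. apply Derive_plus; [apply Hu|apply Hv]. }
    rewrite E. apply IH; [apply Hu|apply Hv].
Qed.

Lemma smL_mult : forall L u v, smL L u -> smL L v -> smL L (fun x => u x * v x).
Proof.
  induction L as [|L IH]; intros u v Hu Hv.
  - split; auto. intro x. apply ex_derive_mult; [apply Hu|apply Hv].
  - split. intro x. apply ex_derive_mult; [apply Hu|apply Hv].
    assert (E : Derive (fun x => u x * v x) = fun x => Derive u x * v x + u x * Derive v x).
    { apply functional_extensionality; intro x. apply Derive_mult; [apply Hu|apply Hv]. }
    rewrite E. apply smL_plus; apply IH.
    + apply Hu.
    + apply smL_weak; auto.
    + apply smL_weak; auto.
    + apply Hv.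
Qed.

Lemma smL_inv : forall L u, smL L u -> (forall x, u x <> 0) -> smL L (fun x => / u x).
Proof.
  induction L as [|L IH]; intros u Hu Hnz.
  - split; auto. intro x. apply ex_derive_inv; auto. apply Hu.
  - split. intro x. apply ex_derive_inv; auto. apply Hu.
    assert (E : Derive (fun x => / u x) = fun x => (-1 * Derive u x) * (/ u x * / u x)).
    { apply functional_extensionality; intro x. rewrite Derive_inv; auto. field. auto. apply Hu. }
    rewrite E. apply smL_mult. apply smL_mult. apply smL_const. apply Hu.
    apply smL_mult; apply IH; auto; apply smL_weak; auto.
Qed.

Lemma smL_affine : forall L u a b, smL L u -> smL L (fun x => u (a * x + b)).
Proof.
  induction L as [|L IH]; intros u a b Hu.
  - split; auto. intro x. apply (ex_derive_comp u (fun x => a * x + b)).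
    apply Hu. auto_derive. auto.
  - split. intro x. apply (ex_derive_comp u (fun x => a * x + b)).
    apply Hu. auto_derive. auto.
    assert (E : Derive (fun x => u (a * x + b)) = fun x => a * Derive u (a * x + b)).
    { apply functional_extensionality; intro x. rewrite (Derive_comp u (fun x => a * x + b)).
      f_equal. apply is_derive_unique. auto_derive. auto. ring. apply Hu. auto_derive. auto. }
    rewrite E. apply smL_mult. apply smL_const. apply IH. apply Hu.
Qed.

Lemma sm1_const a : sm1 (fun _ => a). Proof. intro; apply smL_const. Qed.
Lemma sm1_plus u v : sm1 u -> sm1 v -> sm1 (fun x => u x + v x).
Proof. intros; intro; apply smL_plus; auto. Qed.
Lemma sm1_mult u v : sm1 u -> sm1 v -> sm1 (fun x => u x * v x).
Proof. intros; intro; apply smL_mult; auto. Qed.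
Lemma sm1_inv u : sm1 u -> (forall x, u x <> 0) -> sm1 (fun x => / u x).
Proof. intros; intro; apply smL_inv; auto. Qed.
Lemma sm1_affine u a b : sm1 u -> sm1 (fun x => u (a * x + b)).
Proof. intros; intro; apply smL_affine; auto. Qed.
Lemma sm1_minus u v : sm1 u -> sm1 v -> sm1 (fun x => u x - v x).
Proof.
  intros Hu Hv. apply (sm1_ext (fun x => u x + (-1) * v x)). intro; ring.
  apply sm1_plus; auto. apply sm1_mult; auto using sm1_const.
Qed.

Lemma is_derive_c : forall a x : R, is_derive (fun _ : R => a) x 0.
Proof. intros. apply is_derive_Reals, derivable_pt_lim_const. Qed.

Definition gk (k : nat) (t : R) : R := if Rle_dec t 0 then 0 else (/t)^k * exp (-/t).

Lemma exp_pow_n : forall n x, exp x ^ n = exp (INR n * x).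
Proof.
  induction n as [|n IH]; intro x. simpl. rewrite Rmult_0_l, exp_0. reflexivity.
  rewrite S_INR. simpl pow. rewrite IH. rewrite <- exp_plus. f_equal; ring.
Qed.

Lemma exp_big : forall k u, 0 < u -> u ^ (S (S k)) <= INR (S (S k)) ^ (S (S k)) * exp u.
Proof.
  intros k u Hu. set (m := INR (S (S k))).
  assert (Hm : 0 < m) by (unfold m; apply lt_0_INR; lia).
  assert (E : exp u = exp (u / m) ^ (S (S k))).
  { rewrite exp_pow_n. f_equal. unfold m. field. apply Rgt_not_eq, Hm. }
  rewrite E.
  assert (H1 : 0 <= u / m <= exp (u / m)).
  { split. apply Rlt_le. apply Rdiv_lt_0_compat; auto.
    destruct (Req_dec (u/m) 0) as [e|ne]. rewrite e, exp_0; lra.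
    generalize (exp_ineq1 (u/m) ne); lra. }
  generalize (pow_incr _ _ (S (S k)) H1). intro H2.
  replace (u ^ S (S k)) with (m ^ S (S k) * (u / m) ^ S (S k)).
  apply Rmult_le_compat_l. apply pow_le; lra. exact H2.
  rewrite <- Rpow_mult_distr. f_equal. field. lra.
Qed.

Lemma locally_lt0 : forall x, x < 0 -> locally x (fun t => t < 0).
Proof. intros x Hx. apply (locally_open (fun t => t < 0)); auto. apply open_lt. Qed.
Lemma locally_gt0 : forall x, 0 < x -> locally x (fun t => 0 < t).
Proof. intros x Hx. apply (locally_open (fun t => 0 < t)); auto. apply open_gt. Qed.

Lemma gk_neg : forall k t, t <= 0 -> gk k t = 0.
Proof. intros k t H. unfold gk. destruct (Rle_dec t 0); [reflexivity|lra]. Qed.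
Lemma gk_pos : forall k t, 0 < t -> gk k t = (/t)^k * exp (-/t).
Proof. intros k t H. unfold gk. destruct (Rle_dec t 0); [lra|reflexivity]. Qed.

Lemma gk_deriv : forall k x, is_derive (gk k) x (- INR k * gk (S k) x + gk (S (S k)) x).
Proof.
  intros k x.
  destruct (Rlt_or_le x 0) as [Hx|Hx].
  - rewrite !gk_neg by lra. replace (- INR k * 0 + 0) with 0 by ring.
    apply (is_derive_ext_loc (fun _ => 0)). 
    + generalize (locally_lt0 x Hx). apply filter_imp. intros t Ht. rewrite gk_neg; lra.
    + apply is_derive_c.
  - destruct (Rle_lt_or_eq_dec 0 x Hx) as [Hx'|Hx'].
    + rewrite !gk_pos by lra.
      apply (is_derive_ext_loc (fun t => (/t)^k * exp (-/t))).
      * generalize (locally_gt0 x Hx'). apply filter_imp. intros t Ht. rewrite gk_pos; auto.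
      * auto_derive. lra. destruct k as [|k].
        { simpl. field. lra. }
        { simpl pred. rewrite S_INR. simpl pow. field. lra. }
    + subst x. rewrite !gk_neg by lra. replace (- INR k * 0 + 0) with 0 by ring.
      apply is_derive_Reals. intros eps Heps.
      set (m := INR (S (S k)) ^ S (S k)).
      assert (Hm : 0 < m) by (unfold m; apply pow_lt, lt_0_INR; lia).
      exists (mkposreal (eps / m) (Rdiv_lt_0_compat _ _ Heps Hm)). simpl.
      intros h Hh Hhd. rewrite Rplus_0_l, (gk_neg k 0) by lra.
      destruct (Rlt_or_le h 0) as [hn|hp].
      * rewrite gk_neg by lra. replace ((0 - 0) / h - 0) with 0 by (field; auto).
        rewrite Rabs_R0; auto.
      * assert (hp' : 0 < h) by lra. rewrite gk_pos by auto.
        assert (E : ((/ h) ^ k * exp (- / h) - 0) / h - 0 = (/h) ^ (S k) * exp (- /h)).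
        { simpl pow. field. lra. }
        rewrite E. rewrite Rabs_pos_eq.
        2: { apply Rmult_le_pos. apply pow_le. apply Rlt_le, Rinv_0_lt_compat; auto. apply Rlt_le, exp_pos. }
        assert (Hb := exp_big k (/h) (Rinv_0_lt_compat _ hp')). fold m in Hb.
        rewrite Rabs_pos_eq in Hhd by lra.
        assert (H2 : (/h) ^ S k * exp (-/h) <= m * h).
        { apply Rmult_le_reg_r with (exp (/h) * / h). apply Rmult_lt_0_compat. apply exp_pos. apply Rinv_0_lt_compat; auto.
          replace ((/ h) ^ S k * exp (- / h) * (exp (/ h) * / h)) with ((/h) ^ S (S k) * (exp (-/h) * exp (/h))) by (simpl; ring).
          rewrite <- exp_plus. replace (- / h + / h) with 0 by ring. rewrite exp_0, Rmult_1_r.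
          replace (m * h * (exp (/ h) * / h)) with (m * exp (/h)) by (field; lra). exact Hb. }
        apply Rle_lt_trans with (m * h); auto.
        apply Rmult_lt_reg_r with (/m). apply Rinv_0_lt_compat; auto.
        replace (m * h * / m) with h by (field; lra). exact Hhd.
Qed.
Definition Gs (l : list (R * nat)) (t : R) : R :=
  fold_right (fun ck acc => fst ck * gk (snd ck) t + acc) 0 l.
Definition dl (l : list (R * nat)) : list (R * nat) :=
  flat_map (fun ck => (- fst ck * INR (snd ck), S (snd ck)) :: (fst ck, S (S (snd ck))) :: nil) l.

Lemma Gs_deriv : forall l x, is_derive (Gs l) x (Gs (dl l) x).
Proof.
  induction l as [|[c k] l IH]; intro x.
  - simpl. unfold Gs; simpl. apply is_derive_c.
  - assert (E : Gs (dl ((c,k)::l)) x = c * (- INR k * gk (S k) x + gk (S (S k)) x) + Gs (dl l) x).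
    { unfold Gs, dl; simpl. ring. }
    rewrite E. apply (is_derive_ext (fun t => c * gk k t + Gs l t)).
    { intro t. reflexivity. }
    apply (is_derive_plus (fun t => c * gk k t) (Gs l)).
    apply is_derive_scal, gk_deriv. apply IH.
Qed.

Lemma Gs_smL : forall L l, smL L (Gs l).
Proof.
  induction L as [|L IH]; intro l; split.
  - intro x. eexists. apply Gs_deriv.
  - auto.
  - intro x. eexists. apply Gs_deriv.
  - assert (E : Derive (Gs l) = Gs (dl l)).
    { apply functional_extensionality; intro x. apply is_derive_unique, Gs_deriv. }
    rewrite E. apply IH.
Qed.

Definition hb (t : R) : R := gk 0 t.
Lemma hb_sm1 : sm1 hb.
Proof. apply (sm1_ext (Gs ((1,0%nat)::nil))). intro x; unfold Gs, hb; simpl; ring. intro L; apply Gs_smL. Qed.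
Lemma hb_zero : forall t, t <= 0 -> hb t = 0.
Proof. intros; apply gk_neg; auto. Qed.
Lemma hb_pos : forall t, 0 < t -> 0 < hb t.
Proof. intros t H. unfold hb. rewrite gk_pos by auto. simpl. rewrite Rmult_1_l. apply exp_pos. Qed.
Lemma hb_nonneg : forall t, 0 <= hb t.
Proof. intro t. destruct (Rle_or_lt t 0). rewrite hb_zero; lra. apply Rlt_le, hb_pos; auto. Qed.

Lemma hb_den : forall t, 0 < hb t + hb (-1 * t + 1).
Proof.
  intro t. destruct (Rle_or_lt t 0).
  - generalize (hb_nonneg t) (hb_pos (-1 * t + 1)); intros; lra.
  - generalize (hb_pos t) (hb_nonneg (-1 * t + 1)); intros; lra.
Qed.

Definition sb (t : R) : R := hb t * / (hb t + hb (-1 * t + 1)).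
Lemma sb_sm1 : sm1 sb.
Proof.
  apply sm1_mult. apply hb_sm1. apply sm1_inv.
  apply sm1_plus. apply hb_sm1. apply sm1_affine, hb_sm1.
  intro x; generalize (hb_den x); lra.
Qed.
Lemma sb_zero : forall t, t <= 0 -> sb t = 0.
Proof. intros t H. unfold sb. rewrite hb_zero by auto. ring. Qed.
Lemma sb_one : forall t, 1 <= t -> sb t = 1.
Proof.
  intros t H. unfold sb. rewrite (hb_zero (-1 * t + 1)) by lra.
  generalize (hb_pos t); intro. field. lra.
Qed.

Definition Db (u : R) : R := sb u - sb (1 * u + -1).
Lemma Db_sm1 : sm1 Db.
Proof. apply sm1_minus. apply sb_sm1. apply sm1_affine, sb_sm1. Qed.

Lemma Dn_minus : forall n u v, sm1 u -> sm1 v ->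
  Derive_n (fun x => u x - v x) n = fun x => Derive_n u n x - Derive_n v n x.
Proof.
  induction n as [|n IH]; intros u v Hu Hv; apply functional_extensionality; intro x.
  - reflexivity.
  - simpl. rewrite IH by auto. apply Derive_minus; apply sm1_Dn_ex; auto.
Qed.

Lemma Dn_affine : forall n u a b, sm1 u ->
  Derive_n (fun x => u (a * x + b)) n = fun x => a ^ n * Derive_n u n (a * x + b).
Proof.
  induction n as [|n IH]; intros u a b Hu; apply functional_extensionality; intro x.
  - simpl. ring.
  - simpl. rewrite IH by auto. rewrite Derive_scal.
    rewrite (Derive_comp (Derive_n u n) (fun x => a * x + b)).
    replace (Derive (fun x0 : R => a * x0 + b) x) with a. ring.
    symmetry; apply is_derive_unique. auto_derive; auto. ring.
    apply sm1_Dn_ex; auto. auto_derive; auto.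
Qed.

Lemma cont_zero_left : forall (F : R -> R) u0, continuous F u0 -> (forall t, t < u0 -> F t = 0) -> F u0 = 0.
Proof.
  intros F u0 HC HZ. destruct (Req_dec (F u0) 0) as [e|ne]; auto. exfalso.
  assert (Hp : 0 < Rabs (F u0)) by (apply Rabs_pos_lt; auto).
  destruct (proj1 (filterlim_locally _ _) HC (mkposreal _ Hp)) as [d Hd]. simpl in Hd.
  specialize (Hd (u0 - d/2)).
  assert (Hb : ball u0 d (u0 - d / 2)).
  { apply Rabs_lt_between'. destruct d as [d dp]; simpl; lra. }
  specialize (Hd Hb). rewrite (HZ (u0 - d/2)) in Hd. 2: { destruct d as [d dp]; simpl in *. lra. }
  apply Rabs_lt_between' in Hd. unfold Rminus in Hd. 
  destruct (Rle_or_lt 0 (F u0)); [rewrite Rabs_pos_eq in Hd|rewrite Rabs_left in Hd]; lra.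
Qed.

Lemma cont_zero_right : forall (F : R -> R) u0, continuous F u0 -> (forall t, u0 < t -> F t = 0) -> F u0 = 0.
Proof.
  intros F u0 HC HZ.
  set (G := fun t => F (- t)).
  assert (HG : continuous G (- u0)).
  { assert (Hc : continuous (fun t : R => - t) (- u0)) by (apply (@ex_derive_continuous R_AbsRing R_NormedModule); auto_derive; auto).
    unfold G. apply (continuous_comp (fun t => - t) F). exact Hc.
    rewrite Ropp_involutive; auto. }
  generalize (cont_zero_left G (- u0) HG). unfold G. rewrite Ropp_involutive. intro H; apply H.
  intros t Ht. apply HZ. lra.
Qed.

Lemma sm1_cont : forall u x, sm1 u -> continuous u x.
Proof. intros. apply (@ex_derive_continuous R_AbsRing R_NormedModule), sm1_ex; auto. Qed.

Lemma Dn_const_loc : forall (f : R -> R) a i u, locally u (fun t => f t = a) -> Derive_n f (S i) u = 0.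
Proof.
  intros f a i u H. rewrite (Derive_n_ext_loc f (fun _ => a)). apply Derive_n_const. exact H.
Qed.

Lemma sb_Dn_left : forall i u, u <= 0 -> Derive_n sb i u = 0.
Proof.
  assert (Hlt : forall i u, u < 0 -> Derive_n sb i u = 0).
  { intros [|i] u Hu. simpl. apply sb_zero; lra.
    apply (Dn_const_loc sb 0). generalize (locally_lt0 u Hu). apply filter_imp. intros; apply sb_zero; lra. }
  intros i u Hu. destruct (Rle_lt_or_eq_dec u 0 Hu) as [h|h]. auto.
  subst u. apply cont_zero_left. apply sm1_cont, sm1_Dn, sb_sm1. auto.
Qed.

Lemma sb_Dn_right : forall i u, 1 <= u -> Derive_n sb (S i) u = 0.
Proof.
  assert (Hlt : forall i u, 1 < u -> Derive_n sb (S i) u = 0).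
  { intros i u Hu. apply (Dn_const_loc sb 1).
    assert (H1 : locally u (fun t => 1 < t)) by (apply (locally_open (fun t => 1 < t)); auto; apply open_gt).
    generalize H1. apply filter_imp. intros; apply sb_one; lra. }
  intros i u Hu. destruct (Rle_lt_or_eq_dec 1 u Hu) as [h|h]. auto.
  subst u. apply cont_zero_right. apply sm1_cont, sm1_Dn, sb_sm1. auto.
Qed.

Lemma Db_Dn : forall i u, Derive_n Db i u = Derive_n sb i u - Derive_n sb i (u - 1).
Proof.
  intros i u. unfold Db. rewrite Dn_minus. rewrite Dn_affine. rewrite pow1.
  replace (1 * u + -1) with (u - 1) by ring. ring.
  apply sb_sm1. apply sb_sm1. apply sm1_affine, sb_sm1.
Qed.

Lemma Db_supp : forall i u, u <= 0 \/ 2 <= u -> Derive_n Db i u = 0.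
Proof.
  intros i u [H|H]; rewrite Db_Dn.
  - rewrite !sb_Dn_left by lra. ring.
  - destruct i as [|i]. simpl. rewrite !sb_one by lra. ring.
    rewrite !sb_Dn_right by lra. ring.
Qed.

Lemma Db_bound1 : forall i, exists B, forall u, Rabs (Derive_n Db i u) <= B.
Proof.
  intro i.
  destruct (continuity_ab_maj (fun u => Rabs (Derive_n Db i u)) 0 2) as [Mx [HM _]]. lra.
  { intros c _. apply continuity_pt_filterlim. apply continuous_Rabs_comp.
    apply sm1_cont, sm1_Dn, Db_sm1. }
  exists (Rabs (Derive_n Db i Mx)). intro u.
  destruct (Rle_or_lt u 0) as [h|h]. rewrite Db_supp by auto. rewrite Rabs_R0; apply Rabs_pos.
  destruct (Rle_or_lt 2 u) as [h'|h']. rewrite Db_supp by auto. rewrite Rabs_R0; apply Rabs_pos.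
  apply HM. lra.
Qed.

Lemma Db_bound : forall m, exists B, 0 <= B /\ forall i u, (i <= m)%nat -> Rabs (Derive_n Db i u) <= B.
Proof.
  induction m as [|m [B [HB0 HB]]].
  - destruct (Db_bound1 0) as [B HB]. exists B. split.
    apply Rle_trans with (Rabs (Derive_n Db 0 0)); auto. apply Rabs_pos.
    intros i u Hi. replace i with 0%nat by lia. auto.
  - destruct (Db_bound1 (S m)) as [B' HB']. exists (Rmax B B'). split.
    apply Rle_trans with B; auto. apply Rmax_l.
    intros i u Hi. destruct (Nat.eq_dec i (S m)) as [e|ne].
    + subst. apply Rle_trans with B'; auto. apply Rmax_r.
    + apply Rle_trans with B. apply HB; lia. apply Rmax_l.
Qed.

Fixpoint sumk (f : nat -> R) (M : nat) : R :=
  match M with 0%nat => 0 | S M' => sumk f M' + f M' end.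

Lemma sumk_ext : forall f g M, (forall k, (k < M)%nat -> f k = g k) -> sumk f M = sumk g M.
Proof. intros f g M; induction M; intros H; simpl; auto. rewrite IHM, H; auto. Qed.
Lemma sumk_le : forall f g M, (forall k, (k < M)%nat -> f k <= g k) -> sumk f M <= sumk g M.
Proof. intros f g M; induction M; intros H; simpl. lra. apply Rplus_le_compat; auto. Qed.
Lemma sumk_plus : forall f g M, sumk (fun k => f k + g k) M = sumk f M + sumk g M.
Proof. intros f g M; induction M; simpl. ring. rewrite IHM; ring. Qed.
Lemma sumk_scal : forall a f M, sumk (fun k => a * f k) M = a * sumk f M.
Proof. intros a f M; induction M; simpl. ring. rewrite IHM; ring. Qed.
Lemma sumk_zero : forall f M, (forall k, (k < M)%nat -> f k = 0) -> sumk f M = 0.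
Proof. intros f M; induction M; intros H; simpl; auto. rewrite IHM, H; auto. ring. Qed.
Lemma sumk_nonneg : forall f M, (forall k, (k < M)%nat -> 0 <= f k) -> 0 <= sumk f M.
Proof. intros f M; induction M; intros H; simpl. lra. apply Rplus_le_le_0_compat; auto. Qed.
Lemma Rabs_sumk : forall f M, Rabs (sumk f M) <= sumk (fun k => Rabs (f k)) M.
Proof.
  intros f M; induction M; simpl. rewrite Rabs_R0; lra.
  eapply Rle_trans. apply Rabs_triang. lra.
Qed.
Lemma sumk_nz : forall f M, sumk f M <> 0 -> exists k, (k < M)%nat /\ f k <> 0.
Proof.
  intros f M; induction M; intros H; simpl in H. lra.
  destruct (Req_dec (f M) 0) as [e|ne].
  - rewrite e, Rplus_0_r in H. destruct (IHM H) as [k [Hk Hf]]. exists k; split; auto.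
  - exists M; split; auto.
Qed.
Lemma sumk_prod : forall a b M1 M2,
  sumk (fun k => sumk (fun l => a k * b l) M2) M1 = sumk a M1 * sumk b M2.
Proof.
  intros a b M1 M2. induction M1; simpl. ring.
  rewrite IHM1, sumk_scal. ring.
Qed.
Lemma sumk_tele : forall F M, sumk (fun k => F k - F (S k)) M = F 0%nat - F M.
Proof. intros F M; induction M; simpl. ring. rewrite IHM; ring. Qed.

Lemma sumk_count : forall (Sf : R -> R) B t M,
  (forall u, Sf u <> 0 -> 0 < u <= 1) -> (forall u, Rabs (Sf u) <= B) ->
  sumk (fun k => Rabs (Sf (t - INR k))) M <= B.
Proof.
  intros Sf B t M Hs HB. assert (B0 : 0 <= B) by (apply Rle_trans with (Rabs (Sf 0)); auto; apply Rabs_pos).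
  induction M; simpl. auto.
  destruct (Req_dec (Sf (t - INR M)) 0) as [e|ne].
  - rewrite e, Rabs_R0. lra.
  - destruct (Hs _ ne) as [H1 H2].
    rewrite sumk_zero. rewrite Rplus_0_l; auto.
    intros k Hk. destruct (Req_dec (Sf (t - INR k)) 0) as [e|ne'].
    rewrite e; apply Rabs_R0. exfalso. destruct (Hs _ ne') as [H3 H4].
    assert (INR k + 1 <= INR M). { rewrite <- S_INR. apply le_INR. lia. }
    lra.
Qed.

Lemma Db_count : forall i B t M, (forall u, Rabs (Derive_n Db i u) <= B) ->
  sumk (fun k => Rabs (Derive_n Db i (t - INR k))) M <= 2 * B.
Proof.
  intros i B t M HB.
  set (S1 := fun u => if Rle_dec u 1 then (if Rlt_dec 0 u then Derive_n Db i u else 0) else 0).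
  set (S2 := fun u => if Rle_dec u 1 then (if Rlt_dec 0 u then Derive_n Db i (u + 1) else 0) else 0).
  assert (B0 : 0 <= B) by (apply Rle_trans with (Rabs (Derive_n Db i 0)); auto; apply Rabs_pos).
  assert (H1 : forall u, S1 u <> 0 -> 0 < u <= 1).
  { intros u; unfold S1; destruct (Rle_dec u 1); destruct (Rlt_dec 0 u); intros; try lra; tauto. }
  assert (H2 : forall u, S2 u <> 0 -> 0 < u <= 1).
  { intros u; unfold S2; destruct (Rle_dec u 1); destruct (Rlt_dec 0 u); intros; try lra; tauto. }
  assert (B1 : forall u, Rabs (S1 u) <= B).
  { intros u; unfold S1; destruct (Rle_dec u 1); destruct (Rlt_dec 0 u); rewrite ?Rabs_R0; auto. }
  assert (B2 : forall u, Rabs (S2 u) <= B).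
  { intros u; unfold S2; destruct (Rle_dec u 1); destruct (Rlt_dec 0 u); rewrite ?Rabs_R0; auto. }
  apply Rle_trans with (sumk (fun k => Rabs (S1 (t - INR k))) M + sumk (fun k => Rabs (S2 ((t - 1) - INR k))) M).
  - rewrite <- sumk_plus. apply sumk_le. intros k _.
    set (u := t - INR k). replace (t - 1 - INR k) with (u - 1) by (unfold u; ring).
    unfold S1, S2. clearbody u.
    destruct (Rle_dec u 0) as [a|a].
    { rewrite Db_supp by auto. rewrite Rabs_R0. apply Rplus_le_le_0_compat; apply Rabs_pos. }
    destruct (Rle_dec 2 u) as [b|b].
    { rewrite Db_supp by auto. rewrite Rabs_R0. apply Rplus_le_le_0_compat; apply Rabs_pos. }
    destruct (Rle_dec u 1) as [c|c].
    + destruct (Rlt_dec 0 u); [|lra]. destruct (Rle_dec (u-1) 1); [|lra]. destruct (Rlt_dec 0 (u-1)); [lra|].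
      rewrite Rabs_R0; lra.
    + destruct (Rle_dec (u-1) 1); [|lra]. destruct (Rlt_dec 0 (u-1)); [|lra].
      replace (u - 1 + 1) with u by ring. rewrite Rabs_R0; lra.
  - generalize (sumk_count S1 B t M H1 B1) (sumk_count S2 B (t - 1) M H2 B2). lra.
Qed.

Definition lvl0 (U : pt -> Prop) (f : pt -> C) : Prop :=
  forall p, U p -> ex_d1 f p /\ ex_d2 f p /\ continuous f p.
Fixpoint sm2 (L : nat) (U : pt -> Prop) (f : pt -> C) : Prop :=
  lvl0 U f /\ match L with 0%nat => True | S L' => sm2 L' U (d1 f) /\ sm2 L' U (d2 f) end.
Definition smU (U : pt -> Prop) (f : pt -> C) : Prop := forall L, sm2 L U f.

Lemma sm2_weak : forall L U f, sm2 (S L) U f -> sm2 L U f.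
Proof.
  induction L as [|L IH]; intros U f [H0 [H1 H2]]; simpl; split; auto.
Qed.

Lemma dw_app : forall w b f, dw (w ++ b :: nil) f = dw w ((if b then d2 else d1) f).
Proof. induction w as [|a w IH]; intros b f; simpl; auto. rewrite IH; auto. Qed.

Lemma smooth_on_smU : forall U f, smooth_on U f -> smU U f.
Proof.
  intros U f H L. revert f H. induction L as [|L IH]; intros f H.
  - split; auto. intros p Hp. apply (H nil p Hp).
  - split. intros p Hp. apply (H nil p Hp). split; apply IH; intros w p Hp.
    + generalize (H (w ++ false :: nil) p Hp). rewrite dw_app. auto.
    + generalize (H (w ++ true :: nil) p Hp). rewrite dw_app. auto.
Qed.

Lemma smU_d1 : forall U f, smU U f -> smU U (d1 f).
Proof. intros U f H L. apply (H (S L)). Qed.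
Lemma smU_d2 : forall U f, smU U f -> smU U (d2 f).
Proof. intros U f H L. apply (H (S L)). Qed.
Lemma smU_lvl0 : forall U f, smU U f -> lvl0 U f.
Proof. intros U f H. apply (H 0%nat). Qed.

Lemma smU_smooth_on : forall U f, smU U f -> smooth_on U f.
Proof.
  intros U f H w. revert f H. induction w as [|b w IH] using rev_ind; intros f H p Hp.
  - apply (smU_lvl0 U f H p Hp).
  - rewrite dw_app. apply IH; auto. destruct b; [apply smU_d2|apply smU_d1]; auto.
Qed.

Lemma open_box : forall (U : pt -> Prop) (p : pt), open U -> U p ->
  exists e, 0 < e /\ forall q, Rabs (fst q - fst p) < e -> Rabs (snd q - snd p) < e -> U q.
Proof.
  intros U p HU Hp. destruct (HU p Hp) as [eps He]. exists eps. split. apply cond_pos.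
  intros q H1 H2. apply He. split; assumption.
Qed.

Lemma loc_line1 : forall (U : pt -> Prop) (p : pt), open U -> U p -> locally (fst p) (fun t => U (t, snd p)).
Proof.
  intros U p HU Hp. destruct (open_box U p HU Hp) as [e [He Hq]].
  exists (mkposreal e He). intros y Hy. apply Hq; simpl. exact Hy.
  rewrite Rminus_eq_0, Rabs_R0; auto.
Qed.
Lemma loc_line2 : forall (U : pt -> Prop) (p : pt), open U -> U p -> locally (snd p) (fun t => U (fst p, t)).
Proof.
  intros U p HU Hp. destruct (open_box U p HU Hp) as [e [He Hq]].
  exists (mkposreal e He). intros y Hy. apply Hq; simpl.
  rewrite Rminus_eq_0, Rabs_R0; auto. exact Hy.
Qed.

Lemma cont_C : forall (f : pt -> C) (p : pt),
  continuous (fun q => fst (f q)) p -> continuous (fun q => snd (f q)) p -> continuous f p.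
Proof.
  intros f p H1 H2. apply filterlim_locally. intro eps.
  generalize (proj1 (filterlim_locally _ _) H1 eps) (proj1 (filterlim_locally _ _) H2 eps).
  intros A B. generalize (filter_and _ _ A B). apply filter_imp. intros q [a b]. split; assumption.
Qed.

Lemma cont_fst : forall (f : pt -> C) (p : pt), continuous f p -> continuous (fun q => fst (f q)) p.
Proof.
  intros f p H. apply (continuous_comp f fst). auto. destruct (f p) as [a b]. apply continuous_fst.
Qed.
Lemma cont_snd : forall (f : pt -> C) (p : pt), continuous f p -> continuous (fun q => snd (f q)) p.
Proof.
  intros f p H. apply (continuous_comp f snd). auto. destruct (f p) as [a b]. apply continuous_snd.
Qed.

Lemma contR_plus : forall (F G : pt -> R) p, continuous F p -> continuous G p -> continuous (fun q => F q + G q) p.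
Proof. intros. apply (continuous_plus F G); auto. Qed.
Lemma contR_mult : forall (F G : pt -> R) p, continuous F p -> continuous G p -> continuous (fun q => F q * G q) p.
Proof. intros. apply (continuous_mult F G); auto. Qed.
Lemma contR_opp : forall (F : pt -> R) p, continuous F p -> continuous (fun q => - F q) p.
Proof. intros. apply (continuous_opp F); auto. Qed.
Lemma contR_const : forall (a : R) (p : pt), continuous (fun _ : pt => a) p.
Proof. intros. apply continuous_const. Qed.

Definition eqU (U : pt -> Prop) (f g : pt -> C) : Prop := forall p, U p -> f p = g p.

Lemma eqU_d1 : forall U f g, open U -> eqU U f g -> eqU U (d1 f) (d1 g).
Proof.
  intros U f g HU H p Hp. unfold d1. f_equal; apply Derive_ext_loc;
  generalize (loc_line1 U p HU Hp); apply filter_imp; intros t Ht; rewrite H; auto.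
Qed.
Lemma eqU_d2 : forall U f g, open U -> eqU U f g -> eqU U (d2 f) (d2 g).
Proof.
  intros U f g HU H p Hp. unfold d2. f_equal; apply Derive_ext_loc;
  generalize (loc_line2 U p HU Hp); apply filter_imp; intros t Ht; rewrite H; auto.
Qed.

Lemma eqU_lvl0 : forall U f g, open U -> eqU U f g -> lvl0 U f -> lvl0 U g.
Proof.
  intros U f g HU H Hf p Hp. destruct (Hf p Hp) as [[A1 A2] [[B1 B2] Cc]].
  split; [|split]; [split|split|].
  - apply (ex_derive_ext_loc (fun t => fst (f (t, snd p)))); auto.
    generalize (loc_line1 U p HU Hp); apply filter_imp; intros t Ht; rewrite H; auto.
  - apply (ex_derive_ext_loc (fun t => snd (f (t, snd p)))); auto.
    generalize (loc_line1 U p HU Hp); apply filter_imp; intros t Ht; rewrite H; auto.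
  - apply (ex_derive_ext_loc (fun t => fst (f (fst p, t)))); auto.
    generalize (loc_line2 U p HU Hp); apply filter_imp; intros t Ht; rewrite H; auto.
  - apply (ex_derive_ext_loc (fun t => snd (f (fst p, t)))); auto.
    generalize (loc_line2 U p HU Hp); apply filter_imp; intros t Ht; rewrite H; auto.
  - unfold continuous. rewrite <- (H p Hp). apply (filterlim_ext_loc f g); auto.
    generalize (HU p Hp). apply filter_imp. intros q Hq; auto.
Qed.

Lemma eqU_sm2 : forall L U f g, open U -> eqU U f g -> sm2 L U f -> sm2 L U g.
Proof.
  induction L as [|L IH]; intros U f g HU H [H0 H1]; split.
  - apply (eqU_lvl0 U f); auto.
  - auto.
  - apply (eqU_lvl0 U f); auto.
  - destruct H1 as [A B]. split.
    apply (IH U (d1 f)); auto. apply eqU_d1; auto.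
    apply (IH U (d2 f)); auto. apply eqU_d2; auto.
Qed.
Lemma eqU_smU : forall U f g, open U -> eqU U f g -> smU U f -> smU U g.
Proof. intros U f g HU H Hf L. apply (eqU_sm2 L U f); auto. Qed.
Lemma eqU_trans : forall U f g h, eqU U f g -> eqU U g h -> eqU U f h.
Proof. intros U f g h A B p Hp. rewrite A, B; auto. Qed.
Lemma eqU_sym : forall U f g, eqU U f g -> eqU U g f.
Proof. intros U f g A p Hp. rewrite A; auto. Qed.
Lemma eqU_refl : forall U f, eqU U f f.
Proof. intros U f p _; auto. Qed.

Definition fplus (f g : pt -> C) : pt -> C := fun p => Cplus (f p) (g p).
Definition fmult (f g : pt -> C) : pt -> C := fun p => Cmult (f p) (g p).

Lemma lvl0_plus : forall U f g, lvl0 U f -> lvl0 U g -> lvl0 U (fplus f g).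
Proof.
  intros U f g Hf Hg p Hp. destruct (Hf p Hp) as [[A1 A2] [[B1 B2] Cf]].
  destruct (Hg p Hp) as [[A1' A2'] [[B1' B2'] Cg]].
  unfold fplus, Cplus; simpl. split; [|split]; [split|split|].
  - apply (ex_derive_plus (fun t => fst (f (t, snd p))) (fun t => fst (g (t, snd p)))); auto.
  - apply (ex_derive_plus (fun t => snd (f (t, snd p))) (fun t => snd (g (t, snd p)))); auto.
  - apply (ex_derive_plus (fun t => fst (f (fst p, t))) (fun t => fst (g (fst p, t)))); auto.
  - apply (ex_derive_plus (fun t => snd (f (fst p, t))) (fun t => snd (g (fst p, t)))); auto.
  - apply cont_C; simpl; apply contR_plus; auto using cont_fst, cont_snd.
Qed.

Lemma lvl0_mult : forall U f g, lvl0 U f -> lvl0 U g -> lvl0 U (fmult f g).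
Proof.
  intros U f g Hf Hg p Hp. destruct (Hf p Hp) as [[A1 A2] [[B1 B2] Cf]].
  destruct (Hg p Hp) as [[A1' A2'] [[B1' B2'] Cg]].
  unfold fmult, Cmult; simpl. split; [|split]; [split|split|].
  - apply (ex_derive_minus (fun t => fst (f (t, snd p)) * fst (g (t, snd p))) (fun t => snd (f (t, snd p)) * snd (g (t, snd p)))); apply ex_derive_mult; auto.
  - apply (ex_derive_plus (fun t => fst (f (t, snd p)) * snd (g (t, snd p))) (fun t => snd (f (t, snd p)) * fst (g (t, snd p)))); apply ex_derive_mult; auto.
  - apply (ex_derive_minus (fun t => fst (f (fst p, t)) * fst (g (fst p, t))) (fun t => snd (f (fst p, t)) * snd (g (fst p, t)))); apply ex_derive_mult; auto.
  - apply (ex_derive_plus (fun t => fst (f (fst p, t)) * snd (g (fst p, t))) (fun t => snd (f (fst p, t)) * fst (g (fst p, t)))); apply ex_derive_mult; auto.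
  - apply cont_C; simpl.
    + apply contR_plus. apply contR_mult; auto using cont_fst. apply contR_opp, contR_mult; auto using cont_snd.
    + apply contR_plus; apply contR_mult; auto using cont_fst, cont_snd.
Qed.

Lemma d1_plus : forall U f g, lvl0 U f -> lvl0 U g -> eqU U (d1 (fplus f g)) (fplus (d1 f) (d1 g)).
Proof.
  intros U f g Hf Hg p Hp. destruct (Hf p Hp) as [[A1 A2] _]. destruct (Hg p Hp) as [[B1 B2] _].
  unfold d1, fplus, Cplus; simpl. f_equal.
  apply (Derive_plus (fun t => fst (f (t, snd p))) (fun t => fst (g (t, snd p)))); auto.
  apply (Derive_plus (fun t => snd (f (t, snd p))) (fun t => snd (g (t, snd p)))); auto.
Qed.
Lemma d2_plus : forall U f g, lvl0 U f -> lvl0 U g -> eqU U (d2 (fplus f g)) (fplus (d2 f) (d2 g)).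
Proof.
  intros U f g Hf Hg p Hp. destruct (Hf p Hp) as [_ [[A1 A2] _]]. destruct (Hg p Hp) as [_ [[B1 B2] _]].
  unfold d2, fplus, Cplus; simpl. f_equal.
  apply (Derive_plus (fun t => fst (f (fst p, t))) (fun t => fst (g (fst p, t)))); auto.
  apply (Derive_plus (fun t => snd (f (fst p, t))) (fun t => snd (g (fst p, t)))); auto.
Qed.

Lemma d1_mult : forall U f g, lvl0 U f -> lvl0 U g ->
  eqU U (d1 (fmult f g)) (fplus (fmult (d1 f) g) (fmult f (d1 g))).
Proof.
  intros U f g Hf Hg p Hp. destruct (Hf p Hp) as [[A1 A2] _]. destruct (Hg p Hp) as [[B1 B2] _].
  unfold d1, fplus, fmult, Cplus, Cmult; simpl. f_equal.
  - rewrite (Derive_minus (fun t => fst (f (t, snd p)) * fst (g (t, snd p))) (fun t => snd (f (t, snd p)) * snd (g (t, snd p)))).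
    rewrite !Derive_mult by auto. destruct p; simpl; ring.
    apply ex_derive_mult; auto. apply ex_derive_mult; auto.
  - rewrite (Derive_plus (fun t => fst (f (t, snd p)) * snd (g (t, snd p))) (fun t => snd (f (t, snd p)) * fst (g (t, snd p)))).
    rewrite !Derive_mult by auto. destruct p; simpl; ring.
    apply ex_derive_mult; auto. apply ex_derive_mult; auto.
Qed.
Lemma d2_mult : forall U f g, lvl0 U f -> lvl0 U g ->
  eqU U (d2 (fmult f g)) (fplus (fmult (d2 f) g) (fmult f (d2 g))).
Proof.
  intros U f g Hf Hg p Hp. destruct (Hf p Hp) as [_ [[A1 A2] _]]. destruct (Hg p Hp) as [_ [[B1 B2] _]].
  unfold d2, fplus, fmult, Cplus, Cmult; simpl. f_equal.
  - rewrite (Derive_minus (fun t => fst (f (fst p, t)) * fst (g (fst p, t))) (fun t => snd (f (fst p, t)) * snd (g (fst p, t)))).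
    rewrite !Derive_mult by auto. destruct p; simpl; ring.
    apply ex_derive_mult; auto. apply ex_derive_mult; auto.
  - rewrite (Derive_plus (fun t => fst (f (fst p, t)) * snd (g (fst p, t))) (fun t => snd (f (fst p, t)) * fst (g (fst p, t)))).
    rewrite !Derive_mult by auto. destruct p; simpl; ring.
    apply ex_derive_mult; auto. apply ex_derive_mult; auto.
Qed.

Lemma sm2_plus : forall L U f g, open U -> sm2 L U f -> sm2 L U g -> sm2 L U (fplus f g).
Proof.
  induction L as [|L IH]; intros U f g HU Hf Hg.
  - split; auto. apply lvl0_plus; [apply Hf|apply Hg].
  - split. apply lvl0_plus; [apply Hf|apply Hg]. split.
    + apply (eqU_sm2 L U (fplus (d1 f) (d1 g))); auto. apply eqU_sym, d1_plus; [apply Hf|apply Hg].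
      apply IH; auto; [apply Hf|apply Hg].
    + apply (eqU_sm2 L U (fplus (d2 f) (d2 g))); auto. apply eqU_sym, d2_plus; [apply Hf|apply Hg].
      apply IH; auto; [apply Hf|apply Hg].
Qed.

Lemma sm2_mult : forall L U f g, open U -> sm2 L U f -> sm2 L U g -> sm2 L U (fmult f g).
Proof.
  induction L as [|L IH]; intros U f g HU Hf Hg.
  - split; auto. apply lvl0_mult; [apply Hf|apply Hg].
  - split. apply lvl0_mult; [apply Hf|apply Hg]. split.
    + apply (eqU_sm2 L U (fplus (fmult (d1 f) g) (fmult f (d1 g)))); auto. apply eqU_sym, d1_mult; [apply Hf|apply Hg].
      apply sm2_plus; auto; apply IH; auto; try apply Hf; try apply Hg; apply sm2_weak; auto.
    + apply (eqU_sm2 L U (fplus (fmult (d2 f) g) (fmult f (d2 g)))); auto. apply eqU_sym, d2_mult; [apply Hf|apply Hg].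
      apply sm2_plus; auto; apply IH; auto; try apply Hf; try apply Hg; apply sm2_weak; auto.
Qed.

Lemma smU_plus : forall U f g, open U -> smU U f -> smU U g -> smU U (fplus f g).
Proof. intros; intro L; apply sm2_plus; auto. Qed.
Lemma smU_mult : forall U f g, open U -> smU U f -> smU U g -> smU U (fmult f g).
Proof. intros; intro L; apply sm2_mult; auto. Qed.

Definition Dir (b : bool) : (pt -> C) -> (pt -> C) := if b then d2 else d1.
Definition fzero : pt -> C := fun _ => (0, 0).

Lemma eqU_D : forall b U f g, open U -> eqU U f g -> eqU U (Dir b f) (Dir b g).
Proof. intros [|]; simpl; [apply eqU_d2|apply eqU_d1]. Qed.
Lemma D_plus : forall b U f g, lvl0 U f -> lvl0 U g -> eqU U (Dir b (fplus f g)) (fplus (Dir b f) (Dir b g)).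
Proof. intros [|]; simpl; [apply d2_plus|apply d1_plus]. Qed.
Lemma D_mult : forall b U f g, lvl0 U f -> lvl0 U g ->
  eqU U (Dir b (fmult f g)) (fplus (fmult (Dir b f) g) (fmult f (Dir b g))).
Proof. intros [|]; simpl; [apply d2_mult|apply d1_mult]. Qed.
Lemma smU_D : forall b U f, smU U f -> smU U (Dir b f).
Proof. intros [|]; simpl; [apply smU_d2|apply smU_d1]. Qed.
Lemma smU_iter : forall b k U f, smU U f -> smU U (Nat.iter k (Dir b) f).
Proof. intros b k U f H; induction k; simpl; auto. apply smU_D; auto. Qed.
Lemma eqU_iter : forall b k U f g, open U -> eqU U f g -> eqU U (Nat.iter k (Dir b) f) (Nat.iter k (Dir b) g).
Proof. intros b k U f g HU H; induction k; simpl; auto. apply eqU_D; auto. Qed.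

Lemma D_zero : forall b, Dir b fzero = fzero.
Proof.
  intros [|]; apply functional_extensionality; intro p; unfold Dir, fzero, d1, d2; simpl;
  rewrite Derive_const; reflexivity.
Qed.
Lemma smU_zero : forall U, smU U fzero.
Proof.
  intros U L. induction L as [|L IH].
  - split; auto. intros p Hp. unfold fzero; simpl. split; [|split]; [split|split|]; simpl;
    try apply ex_derive_const. apply continuous_const.
  - split. destruct L; apply (proj1 IH). generalize (D_zero false) (D_zero true). simpl. intros A B; rewrite A, B; auto.
Qed.

Lemma eqU_fplus : forall U f f' g g', eqU U f f' -> eqU U g g' -> eqU U (fplus f g) (fplus f' g').
Proof. intros U f f' g g' A B p Hp. unfold fplus. rewrite A, B; auto. Qed.
Lemma eqU_fmult : forall U f f' g g', eqU U f f' -> eqU U g g' -> eqU U (fmult f g) (fmult f' g').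
Proof. intros U f f' g g' A B p Hp. unfold fmult. rewrite A, B; auto. Qed.

Definition csum {A : Type} (l : list A) (F : A -> pt -> C) : pt -> C :=
  fold_right (fun a acc => fplus (F a) acc) fzero l.

Lemma smU_csum : forall {A} U (l : list A) F, open U -> (forall a, In a l -> smU U (F a)) -> smU U (csum l F).
Proof.
  intros A U l F HU H. induction l as [|a l IH]; simpl. apply smU_zero.
  apply smU_plus; auto. apply H; simpl; auto. apply IH. intros; apply H; simpl; auto.
Qed.

Lemma D_csum : forall {A} b U (l : list A) F, open U -> (forall a, In a l -> smU U (F a)) ->
  eqU U (Dir b (csum l F)) (csum l (fun a => Dir b (F a))).
Proof.
  intros A b U l F HU H. induction l as [|a l IH]; simpl.
  - rewrite D_zero. apply eqU_refl.
  - eapply eqU_trans. apply D_plus. apply smU_lvl0, H; simpl; auto.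
    apply smU_lvl0, smU_csum; auto. intros; apply H; simpl; auto.
    apply eqU_fplus. apply eqU_refl. apply IH. intros; apply H; simpl; auto.
Qed.

Lemma iter_csum : forall {A} b k U (l : list A) F, open U -> (forall a, In a l -> smU U (F a)) ->
  eqU U (Nat.iter k (Dir b) (csum l F)) (csum l (fun a => Nat.iter k (Dir b) (F a))).
Proof.
  intros A b k U l F HU H. induction k as [|k IH]; simpl. apply eqU_refl.
  eapply eqU_trans. apply eqU_D; auto. apply IH. apply D_csum; auto.
  intros; apply smU_iter; auto.
Qed.

Lemma csum_eqU : forall {A} U (l : list A) F G, (forall a, In a l -> eqU U (F a) (G a)) -> eqU U (csum l F) (csum l G).
Proof.
  intros A U l F G H. induction l as [|a l IH]; simpl. apply eqU_refl.
  apply eqU_fplus. apply H; simpl; auto. apply IH; intros; apply H; simpl; auto.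
Qed.

Lemma Cplus_assoc' : forall x y z : C, Cplus x (Cplus y z) = Cplus (Cplus x y) z.
Proof. intros [a b] [c d] [e f]; unfold Cplus; simpl; f_equal; ring. Qed.
Lemma Cplus_0l' : forall x : C, Cplus (0,0) x = x.
Proof. intros [a b]; unfold Cplus; simpl; f_equal; ring. Qed.

Lemma csum_app : forall {A} (l1 l2 : list A) F p, csum (l1 ++ l2) F p = Cplus (csum l1 F p) (csum l2 F p).
Proof.
  intros A l1 l2 F p. induction l1 as [|a l IH]; simpl. unfold fzero. rewrite Cplus_0l'; auto.
  unfold fplus at 1. rewrite IH. unfold fplus. apply Cplus_assoc'.
Qed.
Lemma csum_map : forall {A B} (g : A -> B) (l : list A) F, csum (map g l) F = csum l (fun a => F (g a)).
Proof. intros A B g l F. induction l as [|a l IH]; simpl; auto. rewrite IH; auto. Qed.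
Lemma csum_fplus : forall {A} (l : list A) G H p, csum l (fun a => fplus (G a) (H a)) p = Cplus (csum l G p) (csum l H p).
Proof.
  intros A l G H p. induction l as [|a l IH]; simpl. unfold fzero, Cplus; simpl; f_equal; ring.
  unfold fplus at 1. rewrite IH. unfold fplus. destruct (G a p), (H a p), (csum l G p), (csum l H p).
  unfold Cplus; simpl; f_equal; ring.
Qed.

Fixpoint Ls (k : nat) : list (nat * nat) :=
  match k with
  | 0%nat => (0%nat, 0%nat) :: nil
  | S k => map (fun ab => (S (fst ab), snd ab)) (Ls k) ++ map (fun ab => (fst ab, S (snd ab))) (Ls k)
  end.

Lemma Ls_len : forall k, length (Ls k) = (2 ^ k)%nat.
Proof. induction k; simpl; auto. rewrite length_app, !length_map, IHk. lia. Qed.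
Lemma Ls_sum : forall k a a', In (a, a') (Ls k) -> (a + a' = k)%nat.
Proof.
  induction k; simpl; intros a a' H. destruct H as [H|[]]. inversion H; auto.
  apply in_app_or in H. destruct H as [H|H]; apply in_map_iff in H; destruct H as [[x y] [E Hin]];
  simpl in E; inversion E; subst; apply IHk in Hin; lia.
Qed.

Lemma Leib1 : forall b k U phi f, open U -> smU U phi -> smU U f ->
  eqU U (Nat.iter k (Dir b) (fmult phi f))
        (csum (Ls k) (fun ab => fmult (Nat.iter (fst ab) (Dir b) phi) (Nat.iter (snd ab) (Dir b) f))).
Proof.
  intros b k U phi f HU Hphi Hf. induction k as [|k IH].
  - simpl. intros p Hp. unfold fplus, fzero. destruct (fmult phi f p). unfold Cplus; simpl; f_equal; ring.
  - simpl Nat.iter at 1. eapply eqU_trans. apply eqU_D; auto. apply IH.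
    eapply eqU_trans. apply D_csum; auto. intros; apply smU_mult; auto; apply smU_iter; auto.
    eapply eqU_trans. apply csum_eqU. intros a _. apply D_mult; apply smU_lvl0, smU_iter; auto.
    intros p Hp. simpl Ls. rewrite csum_app, !csum_map, csum_fplus. simpl. reflexivity.
Qed.

Lemma Leibniz : forall i j U phi f, open U -> smU U phi -> smU U f ->
  eqU U (dpow i j (fmult phi f))
    (csum (Ls j) (fun cc => csum (Ls i) (fun aa =>
        fmult (dpow (fst aa) (fst cc) phi) (dpow (snd aa) (snd cc) f)))).
Proof.
  intros i j U phi f HU Hphi Hf. unfold dpow.
  change (Nat.iter j d2 (fmult phi f)) with (Nat.iter j (Dir true) (fmult phi f)).
  change (Nat.iter i d1) with (Nat.iter i (Dir false)).
  eapply eqU_trans. apply eqU_iter; auto. apply Leib1; auto.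
  eapply eqU_trans. apply iter_csum; auto. intros; apply smU_mult; auto; apply smU_iter; auto.
  apply csum_eqU. intros cc _. apply Leib1; auto; apply (smU_iter true); auto.
Qed.

Lemma Cmod_csum : forall {A} (l : list A) F p B, (forall a, In a l -> Cmod (F a p) <= B) ->
  Cmod (csum l F p) <= INR (length l) * B.
Proof.
  intros A l F p B H. induction l as [|a l IH]. simpl. unfold fzero. 
  replace (0, 0) with (RtoC 0) by reflexivity. rewrite Cmod_0. lra.
  change (csum (a::l) F p) with (Cplus (F a p) (csum l F p)).
  change (length (a::l)) with (S (length l)).
  eapply Rle_trans. apply Cmod_triangle.
  rewrite S_INR. specialize (IH (fun a h => H a (or_intror h))). specialize (H a (or_introl eq_refl)). lra.
Qed.

Lemma Leibniz_bound : forall i j U phi f x B, open U -> smU U phi -> smU U f -> U x ->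
  (forall a a' c c', (a + a' = i)%nat -> (c + c' = j)%nat ->
     Cmod (dpow a c phi x) * Cmod (dpow a' c' f x) <= B) ->
  Cmod (dpow i j (fmult phi f) x) <= 2 ^ j * (2 ^ i * B).
Proof.
  intros i j U phi f x B HU Hphi Hf Hx H.
  rewrite (Leibniz i j U phi f HU Hphi Hf x Hx).
  replace (2 ^ j * (2 ^ i * B)) with (INR (length (Ls j)) * (INR (length (Ls i)) * B)).
  2: { rewrite !Ls_len, !pow_INR. replace (INR 2) with 2 by (simpl; ring). reflexivity. }
  apply Cmod_csum. intros [c c'] Hc. apply Cmod_csum. intros [a a'] Ha.
  unfold fmult. rewrite Cmod_mult. apply H; simpl. apply Ls_sum; auto. apply Ls_sum; auto.
Qed.

Definition SS (a : R) (c : nat -> nat -> R) (u v : nat -> R -> R) (M : nat) : pt -> C :=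
  fun p => (a + sumk (fun k => sumk (fun l => c k l * u k (fst p) * v l (snd p)) M) M, 0).

Lemma is_derive_sumk : forall (F : nat -> R -> R) F' x M,
  (forall k, is_derive (F k) x (F' k)) -> is_derive (fun t => sumk (fun k => F k t) M) x (sumk F' M).
Proof.
  intros F F' x M H. induction M; simpl.
  - apply is_derive_c.
  - apply (is_derive_plus (fun t => sumk (fun k => F k t) M) (F M)); auto.
Qed.

Lemma is_derive_sandwich : forall (w : R -> R) A B x, ex_derive w x ->
  is_derive (fun t => A * w t * B) x (A * Derive w x * B).
Proof.
  intros w A B x H. assert (E : forall t : R, A * B * w t = A * w t * B) by (intro; ring).
  apply (is_derive_ext (fun t => (A * B) * w t)). exact E.
  replace (A * Derive w x * B) with ((A * B) * Derive w x) by ring.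
  apply is_derive_scal. apply Derive_correct; auto.
Qed.
Lemma is_derive_sandwich2 : forall (w : R -> R) A B x, ex_derive w x ->
  is_derive (fun t => A * B * w t) x (A * B * Derive w x).
Proof.
  intros w A B x H. apply is_derive_scal. apply Derive_correct; auto.
Qed.

Lemma d1_SS_is : forall a c u v M p, (forall k x, ex_derive (u k) x) ->
  is_derive (fun t => fst (SS a c u v M (t, snd p))) (fst p)
            (fst (SS 0 c (fun k => Derive (u k)) v M p)).
Proof.
  intros a c u v M p H. unfold SS; simpl.
  apply (is_derive_plus (fun _ => a) (fun t => sumk (fun k => sumk (fun l => c k l * u k t * v l (snd p)) M) M)).
  apply is_derive_c. apply is_derive_sumk. intro k. apply is_derive_sumk. intro l.
  apply is_derive_sandwich; auto.
Qed.
Lemma d2_SS_is : forall a c u v M p, (forall l x, ex_derive (v l) x) ->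
  is_derive (fun t => fst (SS a c u v M (fst p, t))) (snd p)
            (fst (SS 0 c u (fun l => Derive (v l)) M p)).
Proof.
  intros a c u v M p H. unfold SS; simpl.
  apply (is_derive_plus (fun _ => a) (fun t => sumk (fun k => sumk (fun l => c k l * u k (fst p) * v l t) M) M)).
  apply is_derive_c. apply is_derive_sumk. intro k. apply is_derive_sumk. intro l.
  apply is_derive_sandwich2; auto.
Qed.

Lemma d1_SS : forall a c u v M, (forall k x, ex_derive (u k) x) ->
  d1 (SS a c u v M) = SS 0 c (fun k => Derive (u k)) v M.
Proof.
  intros a c u v M H. apply functional_extensionality; intro p. unfold d1.
  transitivity (fst (SS 0 c (fun k => Derive (u k)) v M p), 0).
  f_equal. apply is_derive_unique, d1_SS_is; auto. unfold SS; simpl; apply Derive_const. reflexivity.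
Qed.
Lemma d2_SS : forall a c u v M, (forall l x, ex_derive (v l) x) ->
  d2 (SS a c u v M) = SS 0 c u (fun l => Derive (v l)) M.
Proof.
  intros a c u v M H. apply functional_extensionality; intro p. unfold d2.
  transitivity (fst (SS 0 c u (fun l => Derive (v l)) M p), 0).
  f_equal. apply is_derive_unique, d2_SS_is; auto. unfold SS; simpl; apply Derive_const. reflexivity.
Qed.

Lemma contR_sumk : forall (F : nat -> pt -> R) p M, (forall k, continuous (F k) p) ->
  continuous (fun q => sumk (fun k => F k q) M) p.
Proof.
  intros F p M H. induction M; simpl. apply contR_const.
  apply (contR_plus (fun q => sumk (fun k => F k q) M) (F M)); auto.
Qed.

Lemma cont_u_fst : forall (w : R -> R) (p : pt), sm1 w -> continuous (fun q : pt => w (fst q)) p.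
Proof.
  intros w p H. apply (continuous_comp fst w). destruct p; apply continuous_fst. apply sm1_cont; auto.
Qed.
Lemma cont_u_snd : forall (w : R -> R) (p : pt), sm1 w -> continuous (fun q : pt => w (snd q)) p.
Proof.
  intros w p H. apply (continuous_comp snd w). destruct p; apply continuous_snd. apply sm1_cont; auto.
Qed.

Lemma lvl0_SS : forall U a c u v M, (forall k, sm1 (u k)) -> (forall l, sm1 (v l)) -> lvl0 U (SS a c u v M).
Proof.
  intros U a c u v M Hu Hv p _. split; [|split]; [split|split|].
  - eexists. apply d1_SS_is. intros; apply sm1_ex; auto.
  - unfold SS; simpl. apply ex_derive_const.
  - eexists. apply d2_SS_is. intros; apply sm1_ex; auto.
  - unfold SS; simpl. apply ex_derive_const.
  - apply cont_C; unfold SS; simpl.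
    + apply (contR_plus (fun _ => a)). apply contR_const.
      apply contR_sumk; intro k. apply contR_sumk; intro l.
      apply contR_mult. apply contR_mult. apply contR_const. apply cont_u_fst; auto. apply cont_u_snd; auto.
    + apply contR_const.
Qed.

Lemma smU_SS : forall U c M L a u v, (forall k, sm1 (u k)) -> (forall l, sm1 (v l)) -> sm2 L U (SS a c u v M).
Proof.
  intros U c M L. induction L as [|L IH]; intros a u v Hu Hv.
  - split; auto. apply lvl0_SS; auto.
  - split. apply lvl0_SS; auto. split.
    + rewrite d1_SS. apply IH; auto. intro; apply sm1_D; auto. intros; apply sm1_ex; auto.
    + rewrite d2_SS. apply IH; auto. intro; apply sm1_D; auto. intros; apply sm1_ex; auto.
Qed.

Lemma iter2_SS : forall j a c u v M, (forall l, sm1 (v l)) ->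
  Nat.iter j d2 (SS a c u v M) = SS (match j with 0%nat => a | S _ => 0 end) c u (fun l => Derive_n (v l) j) M.
Proof.
  induction j as [|j IH]; intros a c u v M Hv. reflexivity.
  simpl Nat.iter. rewrite IH by auto. rewrite d2_SS. reflexivity.
  intros; apply sm1_Dn_ex; auto.
Qed.
Lemma iter1_SS : forall i a c u v M, (forall k, sm1 (u k)) ->
  Nat.iter i d1 (SS a c u v M) = SS (match i with 0%nat => a | S _ => 0 end) c (fun k => Derive_n (u k) i) v M.
Proof.
  induction i as [|i IH]; intros a c u v M Hu. reflexivity.
  simpl Nat.iter. rewrite IH by auto. rewrite d1_SS. reflexivity.
  intros; apply sm1_Dn_ex; auto.
Qed.

Lemma dpow_SS : forall i j a c u v M, (forall k, sm1 (u k)) -> (forall l, sm1 (v l)) ->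
  dpow i j (SS a c u v M) = SS (match i, j with 0%nat, 0%nat => a | _, _ => 0 end) c
     (fun k => Derive_n (u k) i) (fun l => Derive_n (v l) j) M.
Proof.
  intros i j a c u v M Hu Hv. unfold dpow. rewrite iter2_SS by auto. rewrite iter1_SS by auto.
  destruct i, j; reflexivity.
Qed.

Lemma SS_bound : forall a c u v M p, (forall k l, Rabs (c k l) <= 1) ->
  Cmod (SS a c u v M p) <= Rabs a + sumk (fun k => Rabs (u k (fst p))) M * sumk (fun l => Rabs (v l (snd p))) M.
Proof.
  intros a c u v M p Hc. unfold SS. 
  replace (Cmod (a + sumk (fun k => sumk (fun l => c k l * u k (fst p) * v l (snd p)) M) M, 0))
    with (Rabs (a + sumk (fun k => sumk (fun l => c k l * u k (fst p) * v l (snd p)) M) M)).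
  2: { rewrite <- Cmod_R. reflexivity. }
  eapply Rle_trans. apply Rabs_triang. apply Rplus_le_compat_l.
  rewrite <- sumk_prod. eapply Rle_trans. apply Rabs_sumk. apply sumk_le. intros k _.
  eapply Rle_trans. apply Rabs_sumk. apply sumk_le. intros l _.
  rewrite !Rabs_mult. rewrite Rmult_assoc. 
  replace (Rabs (u k (fst p)) * Rabs (v l (snd p))) with (1 * (Rabs (u k (fst p)) * Rabs (v l (snd p)))) at 2 by ring.
  apply Rmult_le_compat_r. apply Rmult_le_pos; apply Rabs_pos. auto.
Qed.

Lemma nat_above : forall x : R, exists n : nat, x < INR n.
Proof.
  intro x. destruct (Rle_or_lt 0 x) as [h|h].
  - destruct (nfloor_ex x h) as [n [_ Hn]]. exists (S n). rewrite S_INR; lra.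
  - exists 0%nat. simpl; lra.
Qed.

Lemma compact_ext : forall A B : pt -> Prop, (forall p, A p <-> B p) -> compact_set A -> compact_set B.
Proof.
  intros A B E HA I V HV Hc. destruct (HA I V HV) as [l Hl].
  intros x Ax. apply Hc, E; auto. exists l. intros x Bx. apply Hl, E; auto.
Qed.
Lemma compact_empty : compact_set (fun _ => False).
Proof. intros I V _ _. exists nil. intros x []. Qed.
Lemma compact_union : forall A B, compact_set A -> compact_set B -> compact_set (fun p => A p \/ B p).
Proof.
  intros A B HA HB I V HV Hc.
  destruct (HA I V HV) as [l1 H1]. intros; apply Hc; auto.
  destruct (HB I V HV) as [l2 H2]. intros; apply Hc; auto.
  exists (l1 ++ l2). intros x [Ax|Bx].
  destruct (H1 x Ax) as [i [Hi Vi]]. exists i; split; auto. apply in_or_app; auto.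
  destruct (H2 x Bx) as [i [Hi Vi]]. exists i; split; auto. apply in_or_app; auto.
Qed.
Lemma compact_fin : forall M (A : nat -> pt -> Prop), (forall k, (k < M)%nat -> compact_set (A k)) ->
  compact_set (fun p => exists k, (k < M)%nat /\ A k p).
Proof.
  induction M as [|M IH]; intros A HA.
  - apply (compact_ext (fun _ => False)). intros p; split; [tauto|]. intros [k [Hk _]]; lia.
    apply compact_empty.
  - apply (compact_ext (fun p => (exists k, (k < M)%nat /\ A k p) \/ A M p)).
    + intro p; split.
      * intros [[k [Hk Ak]]|AM]. exists k; split; auto. exists M; split; auto.
      * intros [k [Hk Ak]]. destruct (Nat.eq_dec k M) as [e|ne]. subst; auto.
        left; exists k; split; auto; lia.
    + apply compact_union. apply IH; intros; apply HA; lia. apply HA; lia.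
Qed.

Definition rect (a b a' b' : R) (p : pt) : Prop := a <= fst p <= b /\ a' <= snd p <= b'.

Lemma compact_rect : forall a b a' b', a <= b -> a' <= b' -> compact_set (rect a b a' b').
Proof.
  intros a b a' b' Hab Hab' I V HV Hc.
  destruct (Hc (a, a')) as [i0 _]. unfold rect; simpl; lra.
  set (ptof := fun t : Compactness.Tn 2 R => (fst t, fst (snd t)) : pt).
  assert (Hex : forall t : Compactness.Tn 2 R, exists ie : I * posreal,
     rect a b a' b' (ptof t) -> forall q : pt, Rabs (fst q - fst (ptof t)) < snd ie ->
        Rabs (snd q - snd (ptof t)) < snd ie -> V (fst ie) q).
  { intro t. destruct (classic (rect a b a' b' (ptof t))) as [Hr|Hr].
    - destruct (Hc _ Hr) as [i Vi]. destruct (open_box (V i) (ptof t) (HV i) Vi) as [e [He Hq]].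
      exists (i, mkposreal e He). intros _ q; simpl; apply Hq.
    - exists (i0, mkposreal 1 Rlt_0_1). intro; contradiction. }
  set (F := fun t => proj1_sig (constructive_indefinite_description _ (Hex t))).
  assert (HF : forall t, rect a b a' b' (ptof t) -> forall q : pt, Rabs (fst q - fst (ptof t)) < snd (F t) ->
        Rabs (snd q - snd (ptof t)) < snd (F t) -> V (fst (F t)) q).
  { intro t. unfold F. destruct (constructive_indefinite_description _ (Hex t)) as [ie Hie]. exact Hie. }
  apply NNPP. intro Hn.
  apply (compactness_list 2 (a, (a', tt)) (b, (b', tt)) (fun t => snd (F t))). intros [l Hl].
  apply Hn. exists (map (fun t => fst (F t)) l). intros x Hx.
  destruct (Hl (fst x, (snd x, tt))) as [t [Ht [Hbt Hct]]].
  { destruct Hx; simpl; auto. }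
  exists (fst (F t)). split. apply (in_map (fun t => fst (F t))); auto.
  destruct t as [t1 [t2 []]]. simpl in Hbt, Hct.
  destruct Hbt as [B1 [B2 _]]. destruct Hct as [Q1 [Q2 _]]. apply HF.
  unfold rect, ptof; simpl. split; assumption.
  unfold ptof; simpl. exact Q1.
  unfold ptof; simpl. exact Q2.
Qed.

Lemma compact_bounded : forall K, compact_set K -> exists R0, 0 <= R0 /\ forall z, K z -> Rabs (fst z) <= R0 /\ Rabs (snd z) <= R0.
Proof.
  intros K HK.
  destruct (HK nat (fun i p => Rabs (fst p) < INR i /\ Rabs (snd p) < INR i)) as [l Hl].
  - intros i [p1 p2] [H1 H2]. simpl in H1, H2. set (e := Rmin (INR i - Rabs p1) (INR i - Rabs p2)).
    assert (He : 0 < e). unfold e. apply Rmin_glb_lt. lra. lra.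
    exists (mkposreal e He). intros q [Hq1 Hq2].
    destruct q as [q1 q2].
    change (Rabs (q1 - p1) < e) in Hq1. change (Rabs (q2 - p2) < e) in Hq2.
    assert (e <= INR i - Rabs p1) by apply Rmin_l. assert (e <= INR i - Rabs p2) by apply Rmin_r.
    generalize (Rabs_triang_inv q1 p1) (Rabs_triang_inv q2 p2). simpl. intros; split; lra.
  - intros p _. destruct (nat_above (Rmax (Rabs (fst p)) (Rabs (snd p)))) as [n Hn].
    exists n. generalize (Rmax_l (Rabs (fst p)) (Rabs (snd p))) (Rmax_r (Rabs (fst p)) (Rabs (snd p))). intros; split; lra.
  - exists (INR (list_max l)). split. apply pos_INR.
    intros z Kz. destruct (Hl z Kz) as [i [Hi [H1 H2]]].
    assert (INR i <= INR (list_max l)).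
    { apply le_INR. apply (proj1 (Forall_forall _ l) (proj1 (list_max_le l (list_max l)) (Nat.le_refl _)) i Hi). }
    split; lra.
Qed.

Lemma eucl_dist : forall p q : pt, eucl p q = dist_euc (fst p) (snd p) (fst q) (snd q).
Proof. intros. unfold eucl, dist_euc, Rsqr. f_equal. ring. Qed.
Lemma eucl_tri : forall p q r : pt, eucl p q <= eucl p r + eucl r q.
Proof. intros. rewrite !eucl_dist. apply triangle. Qed.
Lemma eucl_sym : forall p q : pt, eucl p q = eucl q p.
Proof. intros. unfold eucl. f_equal. ring. Qed.
Lemma eucl_nonneg : forall p q : pt, 0 <= eucl p q.
Proof. intros. apply sqrt_pos. Qed.
Lemma eucl_self : forall p : pt, eucl p p = 0.
Proof. intros. unfold eucl. replace ((fst p - fst p) ^ 2 + (snd p - snd p) ^ 2) with 0 by ring. apply sqrt_0. Qed.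
Lemma eucl_le : forall p q : pt, eucl p q <= Rabs (fst p - fst q) + Rabs (snd p - snd q).
Proof.
  intros p q. unfold eucl. set (a := fst p - fst q). set (b := snd p - snd q).
  rewrite <- (sqrt_pow2 (Rabs a + Rabs b)). apply sqrt_le_1.
  apply Rplus_le_le_0_compat; apply pow2_ge_0. apply pow2_ge_0.
  rewrite <- (pow2_abs a), <- (pow2_abs b).
  generalize (Rabs_pos a) (Rabs_pos b). intros. nra.
  generalize (Rabs_pos a) (Rabs_pos b). lra.
Qed.

Definition seg (x p : pt) (s : R) : pt := (fst x + s * (fst p - fst x), snd x + s * (snd p - snd x)).
Lemma seg_0 : forall x p, seg x p 0 = x.
Proof. intros [a b] p. unfold seg; simpl. f_equal; ring. Qed.
Lemma seg_1 : forall x p, seg x p 1 = p.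
Proof. intros x [a b]. unfold seg; simpl. f_equal; ring. Qed.
Lemma eucl_seg : forall x p s s', eucl (seg x p s) (seg x p s') = Rabs (s - s') * eucl x p.
Proof.
  intros x p s s'. unfold eucl at 2. rewrite <- sqrt_Rsqr_abs. rewrite <- sqrt_mult_alt by apply Rle_0_sqr.
  unfold eucl. f_equal. unfold seg, Rsqr; simpl; ring.
Qed.

Lemma seg_box : forall x p s s', Rabs (fst (seg x p s) - fst (seg x p s')) <= Rabs (s - s') * (Rabs (fst p - fst x) + Rabs (snd p - snd x))
  /\ Rabs (snd (seg x p s) - snd (seg x p s')) <= Rabs (s - s') * (Rabs (fst p - fst x) + Rabs (snd p - snd x)).
Proof.
  intros x p s s'. unfold seg; simpl.
  replace (fst x + s * (fst p - fst x) - (fst x + s' * (fst p - fst x))) with ((s - s') * (fst p - fst x)) by ring.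
  replace (snd x + s * (snd p - snd x) - (snd x + s' * (snd p - snd x))) with ((s - s') * (snd p - snd x)) by ring.
  rewrite !Rabs_mult. generalize (Rabs_pos (s - s')) (Rabs_pos (fst p - fst x)) (Rabs_pos (snd p - snd x)). intros.
  split; apply Rmult_le_compat_l; lra.
Qed.

Lemma seg_boundary : forall (U : pt -> Prop) x p, open U -> U x -> ~ U p ->
  exists y, boundary U y /\ eucl x y <= eucl x p.
Proof.
  intros U x p HU Ux Np.
  set (E := fun t => 0 <= t <= 1 /\ forall s, 0 <= s <= t -> U (seg x p s)).
  assert (E0 : E 0). { split. lra. intros s Hs. replace s with 0 by lra. rewrite seg_0; auto. }
  assert (Eb : bound E). { exists 1. intros t [Ht _]. lra. }
  destruct (completeness E Eb (ex_intro _ 0 E0)) as [T [HT1 HT2]].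
  assert (T0 : 0 <= T) by (apply HT1; auto).
  assert (T1 : T <= 1). { apply HT2. intros t [Ht _]. lra. }
  assert (Key : forall s, 0 <= s < T -> U (seg x p s)).
  { intros s Hs. apply NNPP. intro Ns.
    assert (T <= s). { apply HT2. intros t [Ht Ht2]. destruct (Rle_or_lt t s) as [h|h]; auto.
      exfalso. apply Ns. apply Ht2. lra. }
    lra. }
  set (Dd := Rabs (fst p - fst x) + Rabs (snd p - snd x) + 1).
  assert (HDd : 0 < Dd) by (unfold Dd; generalize (Rabs_pos (fst p - fst x)) (Rabs_pos (snd p - snd x)); lra).
  assert (NT : ~ U (seg x p T)).
  { intro UT. destruct (open_box U _ HU UT) as [e [He Hq]].
    assert (Near : forall s, Rabs (s - T) < e / Dd -> U (seg x p s)).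
    { intros s Hs. destruct (seg_box x p s T) as [B1 B2]. apply Hq.
      - eapply Rle_lt_trans. apply B1. apply Rle_lt_trans with (Rabs (s - T) * Dd).
        apply Rmult_le_compat_l. apply Rabs_pos. unfold Dd; lra.
        apply Rmult_lt_reg_r with (/ Dd). apply Rinv_0_lt_compat; auto.
        replace (Rabs (s - T) * Dd * / Dd) with (Rabs (s - T)) by (field; lra). exact Hs.
      - eapply Rle_lt_trans. apply B2. apply Rle_lt_trans with (Rabs (s - T) * Dd).
        apply Rmult_le_compat_l. apply Rabs_pos. unfold Dd; lra.
        apply Rmult_lt_reg_r with (/ Dd). apply Rinv_0_lt_compat; auto.
        replace (Rabs (s - T) * Dd * / Dd) with (Rabs (s - T)) by (field; lra). exact Hs. }
    destruct (Req_dec T 1) as [e1|e1].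
    - apply Np. rewrite <- (seg_1 x p). rewrite <- e1. auto.
    - set (eta := Rmin (1 - T) (e / Dd / 2)).
      assert (Heta : 0 < eta). { unfold eta. apply Rmin_glb_lt. lra. apply Rdiv_lt_0_compat; [apply Rdiv_lt_0_compat|]; lra. }
      assert (Heta1 : eta <= 1 - T) by apply Rmin_l.
      assert (Heta2 : eta <= e / Dd / 2) by apply Rmin_r.
      assert (HeD : 0 < e / Dd) by (apply Rdiv_lt_0_compat; lra).
      assert (E (T + eta)).
      { split. lra. intros s Hs. destruct (Rlt_or_le s T) as [h|h]. apply Key; lra.
        apply Near. rewrite Rabs_pos_eq by lra. lra. }
      assert (T + eta <= T) by (apply HT1; auto). lra. }
  assert (Tpos : 0 < T).
  { destruct (Rle_lt_or_eq_dec 0 T T0) as [h|h]; auto. exfalso. apply NT. rewrite <- h, seg_0; auto. }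
  exists (seg x p T). split. split.
  - intros eps Heps. set (m := Rmin T (eps / (eucl x p + 1))).
    assert (Hep : 0 < eucl x p + 1) by (generalize (eucl_nonneg x p); lra).
    assert (Hm : 0 < m) by (unfold m; apply Rmin_glb_lt; auto; apply Rdiv_lt_0_compat; auto).
    assert (Hm1 : m <= T) by apply Rmin_l. assert (Hm2 : m <= eps / (eucl x p + 1)) by apply Rmin_r.
    exists (seg x p (T - m / 2)). split. apply Key; lra.
    rewrite eucl_seg. replace (T - (T - m / 2)) with (m / 2) by ring. rewrite Rabs_pos_eq by lra.
    apply Rle_lt_trans with (eps / (eucl x p + 1) / 2 * eucl x p).
    apply Rmult_le_compat_r. apply eucl_nonneg. lra.
    apply Rmult_lt_reg_r with (2 * (eucl x p + 1)). lra.
    replace (eps / (eucl x p + 1) / 2 * eucl x p * (2 * (eucl x p + 1))) with (eps * eucl x p) by (field; lra).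
    generalize (eucl_nonneg x p). intros. nra.
  - intros eps Heps. exists (seg x p T). split; auto. rewrite eucl_self; auto.
  - rewrite <- (seg_0 x p) at 1. rewrite eucl_seg. replace (0 - T) with (- T) by ring.
    rewrite Rabs_Ropp, Rabs_pos_eq by lra.
    generalize (eucl_nonneg x p). intros. nra.
Qed.

Lemma closure_near : forall (W U : pt -> Prop) delta, open U -> (forall x, W x -> U x) ->
  (forall x y, W x -> boundary U y -> delta <= eucl x y) ->
  forall z p, closure_of W z -> eucl p z < delta -> U p.
Proof.
  intros W U delta HU WU Hd z p Hz Hp. apply NNPP. intro Np.
  destruct (Hz (delta - eucl p z)) as [x [Wx Hx]]. lra.
  assert (Hxp : eucl x p < delta).
  { generalize (eucl_tri x p z) (eucl_sym x z) (eucl_sym p z) (eucl_tri x z p). intros. rewrite eucl_sym in Hx. 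
    apply Rle_lt_trans with (eucl x z + eucl z p). auto. rewrite (eucl_sym z p). lra. }
  destruct (seg_boundary U x p HU (WU x Wx) Np) as [y [By Hy]].
  generalize (Hd x y Wx By). lra.
Qed.

Definition th (r : R) (N k : nat) (x : R) : R := Db (/ r * x + (INR N - INR k)).

Lemma th_sm1 : forall r N k, sm1 (th r N k).
Proof. intros. unfold th. apply sm1_affine, Db_sm1. Qed.

Lemma th_sum_bound : forall r N M m B i y, 0 < r ->
  (forall i u, (i <= m)%nat -> Rabs (Derive_n Db i u) <= B) -> (i <= m)%nat ->
  sumk (fun k => Rabs (Derive_n (th r N k) i y)) M <= 2 * B * Rmax 1 (/ r) ^ m.
Proof.
  intros r N M m B i y Hr HB Hi. unfold th.
  rewrite (sumk_ext _ (fun k => (/ r) ^ i * Rabs (Derive_n Db i ((/ r * y + INR N) - INR k)))).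
  2: { intros k _. rewrite Dn_affine by apply Db_sm1. rewrite Rabs_mult. rewrite Rabs_pos_eq.
       replace (/ r * y + (INR N - INR k)) with (/ r * y + INR N - INR k) by ring. reflexivity.
       apply pow_le. apply Rlt_le, Rinv_0_lt_compat; auto. }
  rewrite sumk_scal.
  assert (HB' : forall u, Rabs (Derive_n Db i u) <= B) by (intro; apply HB; auto).
  generalize (Db_count i B (/ r * y + INR N) M HB'). intro H.
  assert (B0 : 0 <= B) by (apply Rle_trans with (Rabs (Derive_n Db i 0)); auto; apply Rabs_pos).
  assert (Hp : (/ r) ^ i <= Rmax 1 (/ r) ^ m).
  { apply Rle_trans with (Rmax 1 (/ r) ^ i). apply pow_incr. split. apply Rlt_le, Rinv_0_lt_compat; auto. apply Rmax_r.
    apply Rle_pow. apply Rmax_l. auto. }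
  assert (0 <= (/ r) ^ i) by (apply pow_le, Rlt_le, Rinv_0_lt_compat; auto).
  apply Rle_trans with ((/ r) ^ i * (2 * B)). apply Rmult_le_compat_l; auto.
  rewrite Rmult_comm. apply Rmult_le_compat_l; lra.
Qed.

Lemma th_tele : forall r N y, 0 < r -> 1 <= / r * y + INR N -> / r * y + INR N <= INR (S (2 * N)) ->
  sumk (fun k => th r N k y) (S (2 * N)) = 1.
Proof.
  intros r N y Hr H1 H2. set (t := / r * y + INR N).
  rewrite (sumk_ext _ (fun k => sb (t - INR k) - sb (t - INR (S k)))).
  2: { intros k _. unfold th, Db. rewrite S_INR. unfold t. f_equal; f_equal; ring. }
  rewrite (sumk_tele (fun k => sb (t - INR k))). rewrite INR_0, Rminus_0_r.
  rewrite sb_one by (unfold t; lra). rewrite sb_zero. ring. unfold t; lra.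
Qed.

Lemma th_nz : forall r N k y, 0 < r -> th r N k y <> 0 ->
  (INR k - INR N) * r < y < (INR k - INR N + 2) * r.
Proof.
  intros r N k y Hr H. unfold th in H.
  set (u := / r * y + (INR N - INR k)) in H.
  assert (Hu : 0 < u < 2).
  { destruct (Rle_or_lt u 0) as [a|a]. exfalso; apply H. apply (Db_supp 0 u); auto.
    destruct (Rle_or_lt 2 u) as [b|b]. exfalso; apply H. apply (Db_supp 0 u); auto. lra. }
  assert (E : y = (u - (INR N - INR k)) * r) by (unfold u; field; lra).
  rewrite E. split; apply Rmult_lt_compat_r; lra.
Qed.

Lemma chi_bound : forall r N M m B a0 c0 a c p, 0 < r ->
  (forall i u, (i <= m)%nat -> Rabs (Derive_n Db i u) <= B) ->
  Rabs a0 <= 1 -> (forall k l, Rabs (c0 k l) <= 1) -> (a <= m)%nat -> (c <= m)%nat ->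
  Cmod (dpow a c (SS a0 c0 (th r N) (th r N) M) p) <= 1 + (2 * B * Rmax 1 (/ r) ^ m) * (2 * B * Rmax 1 (/ r) ^ m).
Proof.
  intros r N M m B a0 c0 a c p Hr HB Ha0 Hc0 Ha Hc.
  rewrite dpow_SS by (intro; apply th_sm1).
  eapply Rle_trans. apply SS_bound; auto.
  apply Rplus_le_compat.
  - destruct a, c; try (rewrite Rabs_R0; lra). auto.
  - apply Rmult_le_compat. apply sumk_nonneg; intros; apply Rabs_pos. apply sumk_nonneg; intros; apply Rabs_pos.
    apply (th_sum_bound r N M m B a (fst p)); auto.
    apply (th_sum_bound r N M m B c (snd p)); auto.
Qed.

Lemma eqU_dpow : forall i j U F G, open U -> eqU U F G -> eqU U (dpow i j F) (dpow i j G).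
Proof.
  intros i j U F G HU H. unfold dpow.
  change (Nat.iter i d1) with (Nat.iter i (Dir false)). change (Nat.iter j d2) with (Nat.iter j (Dir true)).
  apply eqU_iter; auto. apply eqU_iter; auto.
Qed.
Lemma dpow_zero : forall i j, dpow i j fzero = fzero.
Proof.
  intros i j. unfold dpow.
  assert (A : forall b k, Nat.iter k (Dir b) fzero = fzero).
  { intros b k; induction k. reflexivity. change (Dir b (Nat.iter k (Dir b) fzero) = fzero).
    rewrite IHk. apply D_zero. }
  change (Nat.iter i (Dir false) (Nat.iter j (Dir true) fzero) = fzero). rewrite !A. auto.
Qed.

Lemma sumk_opp : forall f M, sumk (fun k => - f k) M = - sumk f M.
Proof. intros f M. induction M; simpl. ring. rewrite IHM; ring. Qed.

Lemma mono_Omn : forall (Omn : nat -> pt -> Prop), (forall n x, Omn n x -> Omn (S n) x) ->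
  forall a b x, (a <= b)%nat -> Omn a x -> Omn b x.
Proof. intros Omn H a b x Hab. induction Hab; auto. Qed.

Theorem lemma4p4
  (Om : pt -> Prop) (Omn : nat -> pt -> Prop) (nu : nat -> pt -> R) (I1 : nat -> nat)
  (HOm_open : open Om)
  (HOmn_open : forall n, open (Omn n))
  (HOmn_ne : forall n, exists x, Omn n x)
  (HOmn_notall : forall n, exists x, ~ Omn n x)
  (HOmn_incr : forall n x, Omn n x -> Omn (S n) x)
  (HOm_union : forall x, Om x <-> exists n, Omn n x)
  (Hdist : forall n k, (n < k)%nat -> dist_gt0 (Omn n) (boundary (Omn k)))
  (Hnu_pos : forall n x, Om x -> 0 < nu n x)
  (Hnu_cont : forall n x, Om x -> continuous (nu n) x)
  (Hnu_incr : forall n x, Om x -> nu n x <= nu (S n) x)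
  (HI1 : forall n, (n < I1 n)%nat /\
     forall eps, 0 < eps -> exists K, compact_set K /\ (forall x, K x -> closure_of (Omn n) x) /\
       forall x, Omn n x -> ~ K x -> nu n x <= eps * nu (I1 n) x)
  (n : nat) :
  forall f : pt -> C, Enu (Omn (I1 n)) (nu (I1 n)) f ->
  forall (m : nat) (eps : R), 0 < eps ->
  exists g : pt -> C, test_fn (Omn (I1 n)) g /\
    wbound (Omn n) (nu n) m (fun x => Cminus (f x) (g x)) eps.
Proof.
  intros f [Hfs Hfb] m eps Heps.
  destruct (HI1 n) as [HnI HK].
  assert (HUo : open (Omn (I1 n))) by apply HOmn_open.
  assert (WU : forall x, Omn n x -> Omn (I1 n) x).
  { intros x Hx. apply (mono_Omn Omn HOmn_incr n); auto. lia. }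
  destruct (Hdist n (I1 n) HnI) as [delta [Hdel Hdel2]].
  assert (Hnear : forall z p, closure_of (Omn n) z -> eucl p z < delta -> Omn (I1 n) p).
  { apply (closure_near (Omn n) (Omn (I1 n)) delta HUo WU Hdel2). }
  assert (Hf : smU (Omn (I1 n)) f) by (apply smooth_on_smU; auto).
  destruct (Hfb m) as [cf Hcf].
  set (r := delta / 8). assert (Hr : 0 < r) by (unfold r; lra).
  destruct (Db_bound m) as [B [HB0 HB]].
  set (T := 2 * B * Rmax 1 (/ r) ^ m).
  assert (HT : 0 <= T).
  { unfold T. apply Rmult_le_pos. lra. apply pow_le. apply Rle_trans with 1. lra. apply Rmax_l. }
  set (Mx := 1 + T * T).
  assert (HMx : 1 <= Mx) by (unfold Mx; nra).
  set (Q := 2 ^ m * (2 ^ m * (Mx * (Rabs cf + 1)))).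
  assert (HQ : 0 < Q).
  { unfold Q. generalize (Rabs_pos cf). intro. repeat apply Rmult_lt_0_compat; try apply pow_lt; lra. }
  set (eps' := eps / Q). assert (Heps' : 0 < eps') by (unfold eps'; apply Rdiv_lt_0_compat; auto).
  destruct (HK eps' Heps') as [K [HKc [HKcl HKnu]]].
  destruct (compact_bounded K HKc) as [R0 [HR0 HR0b]].
  destruct (nat_above (R0 / r + 3)) as [N HN].
  set (M := S (2 * N)).
  set (Pc := fun k l => exists z, K z /\ Rabs (fst z - (INR k - INR N + 1) * r) <= 2 * r /\
                                        Rabs (snd z - (INR l - INR N + 1) * r) <= 2 * r).
  set (c := fun k l => if excluded_middle_informative (Pc k l) then 1 else 0).
  assert (Hc01 : forall k l, c k l = 0 \/ c k l = 1).
  { intros k l. unfold c. destruct (excluded_middle_informative (Pc k l)); auto. }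
  assert (Hcabs : forall k l, Rabs (- c k l) <= 1).
  { intros k l. rewrite Rabs_Ropp. destruct (Hc01 k l) as [e|e]; rewrite e; rewrite ?Rabs_R0, ?Rabs_R1; lra. }
  assert (Hc1 : forall k l, c k l <> 0 -> Pc k l).
  { intros k l. unfold c. destruct (excluded_middle_informative (Pc k l)); auto. intro h; lra. }
  assert (Hc1' : forall k l, Pc k l -> c k l = 1).
  { intros k l H. unfold c. destruct (excluded_middle_informative (Pc k l)); auto. contradiction. }
  set (psi := SS 0 c (th r N) (th r N) M).
  set (chi := SS 1 (fun k l => - c k l) (th r N) (th r N) M).
  assert (Hpsi : smU (Omn (I1 n)) psi) by (intro L; apply smU_SS; intro; apply th_sm1).
  assert (Hchi : smU (Omn (I1 n)) chi) by (intro L; apply smU_SS; intro; apply th_sm1).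
  exists (fmult psi f). split.
  - split. apply smU_smooth_on, smU_mult; auto.
    set (Ks := fun p => exists k, (k < M)%nat /\ (exists l, (l < M)%nat /\ (c k l = 1 /\
       rect ((INR k - INR N) * r) ((INR k - INR N + 2) * r) ((INR l - INR N) * r) ((INR l - INR N + 2) * r) p))).
    exists Ks. split; [|split].
    + apply compact_fin. intros k _. apply compact_fin. intros l _.
      destruct (Hc01 k l) as [e|e].
      * apply (compact_ext (fun _ => False)). intro p; split; [tauto|]. rewrite e; intros [h _]; lra.
        apply compact_empty.
      * apply (compact_ext (rect ((INR k - INR N) * r) ((INR k - INR N + 2) * r) ((INR l - INR N) * r) ((INR l - INR N + 2) * r))).
        intro p; split; [intro; split; auto|tauto].
        apply compact_rect; nra.
    + intros [p1 p2] [k [Hk [l [Hl [Hckl [[R1 R2] [R3 R4]]]]]]]. simpl in R1, R2, R3, R4.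
      destruct (Hc1 k l) as [[z1 z2] [Kz [Z1 Z2]]]. rewrite Hckl; lra. simpl in Z1, Z2.
      apply (Hnear (z1, z2)). apply HKcl; auto.
      eapply Rle_lt_trans. apply eucl_le. simpl.
      apply Rabs_le_between' in Z1. apply Rabs_le_between' in Z2.
      assert (Rabs (p1 - z1) <= 3 * r) by (apply Rabs_le_between'; lra).
      assert (Rabs (p2 - z2) <= 3 * r) by (apply Rabs_le_between'; lra).
      unfold r in *. lra.
    + intros [p1 p2] nK. unfold fmult.
      assert (E : psi (p1, p2) = (0, 0)).
      { unfold psi, SS. cbn [fst snd]. f_equal. rewrite Rplus_0_l. apply NNPP. intro Hnz.
        destruct (sumk_nz _ _ Hnz) as [k [Hk Hk2]]. destruct (sumk_nz _ _ Hk2) as [l [Hl Hl2]].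
        apply nK. exists k; split; auto. exists l; split; auto.
        assert (A1 : c k l <> 0) by (intro h; apply Hl2; rewrite h; ring).
        assert (A2 : th r N k p1 <> 0) by (intro h; apply Hl2; rewrite h; ring).
        assert (A3 : th r N l p2 <> 0) by (intro h; apply Hl2; rewrite h; ring).
        split. destruct (Hc01 k l); auto; contradiction.
        destruct (th_nz r N k p1 Hr A2). destruct (th_nz r N l p2 Hr A3).
        unfold rect; simpl. lra. }
      rewrite E. unfold Cmult, RtoC; simpl. f_equal; ring.
  - assert (Efun : (fun x => Cminus (f x) (fmult psi f x)) = fmult chi f).
    { apply functional_extensionality; intro x. unfold fmult, psi, chi, SS.
      rewrite (sumk_ext (fun k => sumk (fun l => - c k l * th r N k (fst x) * th r N l (snd x)) M)
                        (fun k => - sumk (fun l => c k l * th r N k (fst x) * th r N l (snd x)) M)).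
      2: { intros k _. rewrite <- sumk_opp. apply sumk_ext. intros; ring. }
      rewrite sumk_opp. destruct (f x) as [a b].
      unfold Cminus, Cplus, Copp, Cmult; simpl. f_equal; ring. }
    intros x i j Wx Hij. rewrite Efun.
    destruct (classic (K x)) as [Kx|nKx].
    + set (V := fun q : pt => exists z, K z /\ Rabs (fst q - fst z) < r / 2 /\ Rabs (snd q - snd z) < r / 2).
      assert (HVo : open V).
      { intros [q1 q2] [[z1 z2] [Kz [A1 A2]]]. simpl in A1, A2.
        set (e := Rmin (r / 2 - Rabs (q1 - z1)) (r / 2 - Rabs (q2 - z2))).
        assert (He : 0 < e) by (unfold e; apply Rmin_glb_lt; lra).
        assert (e <= r / 2 - Rabs (q1 - z1)) by apply Rmin_l. assert (e <= r / 2 - Rabs (q2 - z2)) by apply Rmin_r.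
        exists (mkposreal e He). intros [y1 y2] [Y1 Y2].
        change (Rabs (y1 - q1) < e) in Y1. change (Rabs (y2 - q2) < e) in Y2.
        exists (z1, z2). split; auto. simpl. split.
        - replace (y1 - z1) with ((y1 - q1) + (q1 - z1)) by ring.
          eapply Rle_lt_trans. apply Rabs_triang. lra.
        - replace (y2 - z2) with ((y2 - q2) + (q2 - z2)) by ring.
          eapply Rle_lt_trans. apply Rabs_triang. lra. }
      assert (Hsum1 : forall y zc, Rabs zc <= R0 -> Rabs (y - zc) < r / 2 -> sumk (fun k => th r N k y) M = 1).
      { intros y zc Hzc Hyz.
        assert (Hy : Rabs y <= R0 + r / 2).
        { replace y with ((y - zc) + zc) by ring. eapply Rle_trans. apply Rabs_triang. lra. }
        assert (Ha : Rabs (/ r * y) <= R0 * / r + / 2).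
        { rewrite Rabs_mult, (Rabs_pos_eq (/ r)) by (apply Rlt_le, Rinv_0_lt_compat; auto).
          apply Rle_trans with (/ r * (R0 + r / 2)). apply Rmult_le_compat_l; auto.
          apply Rlt_le, Rinv_0_lt_compat; auto. right; field; lra. }
        unfold Rdiv in HN.
        generalize (Rle_abs (/ r * y)) (Rle_abs (- (/ r * y))). rewrite Rabs_Ropp. intros G1 G2.
        assert (0 < / r) by (apply Rinv_0_lt_compat; auto).
        assert (0 <= R0 * / r) by (apply Rmult_le_pos; lra).
        apply th_tele; auto. lra.
        replace (INR (S (2 * N))) with (2 * INR N + 1) by (rewrite S_INR, mult_INR; simpl; ring).
        lra. }
      assert (HchiV : forall q, V q -> chi q = (0, 0)).
      { intros [q1 q2] [[z1 z2] [Kz [A1 A2]]]. simpl in A1, A2.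
        unfold chi, SS. cbn [fst snd]. f_equal.
        rewrite (sumk_ext _ (fun k => - sumk (fun l => th r N k q1 * th r N l q2) M)).
        rewrite sumk_opp, sumk_prod.
        destruct (HR0b (z1, z2) Kz) as [R1 R2]. simpl in R1, R2.
        rewrite (Hsum1 q1 z1), (Hsum1 q2 z2); auto. ring.
        intros k Hk. rewrite <- sumk_opp. apply sumk_ext. intros l Hl.
        destruct (Req_dec (th r N k q1) 0) as [e1|e1]. rewrite e1; ring.
        destruct (Req_dec (th r N l q2) 0) as [e2|e2]. rewrite e2; ring.
        destruct (th_nz r N k q1 Hr e1). destruct (th_nz r N l q2 Hr e2).
        rewrite (Hc1' k l). ring.
        exists (z1, z2). split; auto. simpl. split.
        - apply Rabs_le_between. apply Rabs_lt_between in A1. lra.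
        - apply Rabs_le_between. apply Rabs_lt_between in A2. lra. }
      assert (Hz : eqU V (fmult chi f) fzero).
      { intros q Hq. unfold fmult, fzero. rewrite (HchiV q Hq). unfold Cmult; simpl. f_equal; ring. }
      assert (Vx : V x). { exists x. split; auto. rewrite !Rminus_eq_0, Rabs_R0. lra. }
      rewrite (eqU_dpow i j V _ _ HVo Hz x Vx). rewrite dpow_zero. unfold fzero.
      replace (0, 0) with (RtoC 0) by reflexivity. rewrite Cmod_0. lra.
    + assert (Ux : Omn (I1 n) x) by (apply WU; auto).
      assert (Omx : Om x) by (apply HOm_union; exists n; auto).
      assert (HnuI : 0 < nu (I1 n) x) by (apply Hnu_pos; auto).
      assert (Hnun : 0 < nu n x) by (apply Hnu_pos; auto).
      assert (Hnuk := HKnu x Wx nKx).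
      assert (Hfx : forall a' c', (a' + c' <= m)%nat -> Cmod (dpow a' c' f x) <= (Rabs cf + 1) / nu (I1 n) x).
      { intros a' c' Hac. generalize (Hcf x a' c' Ux Hac). intro H.
        apply Rmult_le_reg_r with (nu (I1 n) x); auto.
        replace ((Rabs cf + 1) / nu (I1 n) x * nu (I1 n) x) with (Rabs cf + 1) by (field; lra).
        generalize (Rle_abs cf). lra. }
      assert (LB := Leibniz_bound i j (Omn (I1 n)) chi f x (Mx * ((Rabs cf + 1) / nu (I1 n) x)) HUo Hchi Hf Ux).
      assert (Hbd : Cmod (dpow i j (fmult chi f) x) <= 2 ^ j * (2 ^ i * (Mx * ((Rabs cf + 1) / nu (I1 n) x)))).
      { apply LB. intros a a' c' c'' Ha Hc. apply Rmult_le_compat. apply Cmod_ge_0. apply Cmod_ge_0.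
        - unfold chi, Mx, T. apply chi_bound; auto. rewrite Rabs_R1; lra. lia. lia.
        - apply Hfx. lia. }
      assert (P1 : 2 ^ i <= 2 ^ m) by (apply Rle_pow; [lra|lia]).
      assert (P2 : 2 ^ j <= 2 ^ m) by (apply Rle_pow; [lra|lia]).
      assert (Hpos : 0 <= Mx * ((Rabs cf + 1) / nu (I1 n) x)).
      { apply Rmult_le_pos. lra. apply Rlt_le, Rdiv_lt_0_compat; auto. generalize (Rabs_pos cf); lra. }
      apply Rle_trans with (2 ^ j * (2 ^ i * (Mx * ((Rabs cf + 1) / nu (I1 n) x))) * (eps' * nu (I1 n) x)).
      { apply Rmult_le_compat; auto. apply Cmod_ge_0. lra. }
      replace (2 ^ j * (2 ^ i * (Mx * ((Rabs cf + 1) / nu (I1 n) x))) * (eps' * nu (I1 n) x))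
        with (2 ^ j * (2 ^ i * (Mx * (Rabs cf + 1))) * eps') by (field; lra).
      unfold eps'. replace eps with (Q * (eps / Q)) at 2 by (field; lra).
      apply Rmult_le_compat_r. apply Rlt_le, Rdiv_lt_0_compat; auto.
      unfold Q. assert (0 <= Mx * (Rabs cf + 1)) by (generalize (Rabs_pos cf); nra).
      assert (0 <= 2 ^ i) by (apply pow_le; lra). assert (0 <= 2 ^ j) by (apply pow_le; lra).
      apply Rmult_le_compat; auto. apply Rmult_le_pos; auto.
      apply Rmult_le_compat_r; auto.
Qed.
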